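(* Let $n\ge2$ be an integer and $\alpha=1-\frac1n$. There is a constant $C_n>0$ depending only on $n$ such that for every real $\beta\le0$ and every $y\le-1$, $$C_n^{-1}\frac{e^y(-y)^{\frac{1-2\alpha}{4}}}{\Gamma(\alpha-\beta)}\int_{1/\sqrt{-y}}^\infty e^{G(u)}\,du\le\mathcal{M}(\beta,\alpha,y)\le C_n\frac{e^y(-y)^{\frac{1-2\alpha}{4}}}{\Gamma(\alpha-\beta)}\int_0^\infty e^{G(u)}\,du,$$ where $G(u)=-u^2+2\sqrt{-y}\,u+(\alpha-2\beta-\tfrac12)\log u$.
   Context: $(x)_k=\prod_{m=1}^k(x+m-1)$, $(x)_0=1$, and $\mathcal{M}(\beta,\alpha,y)=\sum_{k\ge0}\frac{(\beta)_k}{(\alpha)_k}\frac{y^k}{k!}$ (Kummer's function). *)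

(* Defs.v *)
From Stdlib Require Import Reals.
From Coquelicot Require Import Coquelicot.
Open Scope R_scope.

Fixpoint poch (x : R) (k : nat) : R :=
  match k with
  | O => 1
  | S k' => poch x k' * (x + INR k')
  end.

Definition kummerM (beta alpha y : R) : R :=
  Series (fun k => poch beta k / poch alpha k * (y ^ k / INR (Factorial.fact k))).

Definition Gamma (s : R) : R :=
  RInt_gen (fun t => Rpower t (s - 1) * exp (- t)) (at_right 0) (Rbar_locally p_infty).

Definition Gfun (alpha beta y u : R) : R :=
  - u ^ 2 + 2 * sqrt (- y) * u + (alpha - 2 * beta - 1 / 2) * ln u.

(* Main.v *)
Require Import Defs.
From Stdlib Require Import Reals.
From Coquelicot Require Import Coquelicot.
From Stdlib Require Import Lra Lia Psatz Factorial Classical.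
Open Scope R_scope.

Lemma poch_pos x k : 0 < x -> 0 < poch x k.
Proof. intros Hx; induction k; simpl. lra. apply Rmult_lt_0_compat; auto. pose proof (pos_INR k); lra. Qed.

Lemma poch_S_l x k : poch x (S k) = x * poch (x+1) k.
Proof.
  induction k. simpl. ring.
  change (poch x (S (S k))) with (poch x (S k) * (x + INR (S k))).
  rewrite IHk. simpl poch at 2. rewrite S_INR. ring.
Qed.

Fixpoint binom (n k : nat) : R :=
  match n, k with
  | _, O => 1
  | O, S _ => 0
  | S n', S k' => binom n' k' + binom n' (S k')
  end.

Lemma binom_gt n : forall k, (n < k)%nat -> binom n k = 0.
Proof.
  induction n; intros k Hk; destruct k; try lia; simpl; auto.
  rewrite !IHn; try lia; ring.
Qed.

Lemma binom_nn n : binom n n = 1.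
Proof. induction n; simpl; auto. rewrite IHn, binom_gt; try lia; ring. Qed.

Lemma binom_fact n : forall k, (k <= n)%nat ->
  binom n k * INR (fact k) * INR (fact (n - k)) = INR (fact n).
Proof.
  induction n; intros k Hk.
  - destruct k; try lia. simpl. lra.
  - destruct k.
    + simpl binom. rewrite Nat.sub_0_r. simpl (fact 0). simpl INR. ring.
    + destruct (Nat.eq_dec k n) as [->|Hne].
      * rewrite binom_nn, Nat.sub_diag. simpl (fact 0). simpl INR. ring.
      * simpl binom.
        assert (H1 := IHn k ltac:(lia)).
        assert (H2 := IHn (S k) ltac:(lia)).
        replace (S n - S k)%nat with (S (n - S k)) by lia.
        replace (n - k)%nat with (S (n - S k)) in H1 by lia.
        rewrite !fact_simpl, !mult_INR in *.
        replace (INR (S (n - S k))) with (INR (n - S k) + 1) in * by (rewrite S_INR; ring).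
        replace (INR (S k)) with (INR k + 1) in * by (rewrite S_INR; ring).
        replace (INR (S n)) with (INR n + 1) by (rewrite S_INR; ring).
        replace (INR (n - S k)) with (INR n - INR k - 1) in *
          by (rewrite minus_INR by lia; rewrite S_INR; ring).
        rewrite <- H2. rewrite <- H2 in H1.
        set (F2 := INR (fact (n - S k))) in *. set (fk := INR (fact k)) in *.
        transitivity ((INR k + 1) * (binom n k * fk * ((INR n - INR k - 1 + 1) * F2))
           + (binom n (S k) * ((INR k + 1) * fk) * F2) * (INR n - INR k)); [ring|].
        rewrite H1; ring.
Qed.

Definition Vs (n : nat) (a b : R) : R :=
  sum_f_R0 (fun k => binom n k * (-1)^k * (poch a k / poch b k)) n.

Lemma Vs_rec n a b : 0 < b ->
  Vs (S n) a b = Vs n a b - a / b * Vs n (a+1) (b+1).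
Proof.
  intros Hb. unfold Vs.
  rewrite decomp_sum by lia. simpl Nat.pred.
  assert (E1 : sum_f_R0 (fun k => binom n k * (-1)^k * (poch a k / poch b k)) (S n)
     = sum_f_R0 (fun k => binom n k * (-1)^k * (poch a k / poch b k)) n).
  { rewrite tech5, binom_gt by lia. ring. }
  rewrite <- E1. rewrite (decomp_sum _ (S n)) by lia. simpl Nat.pred.
  assert (Hp : forall i, 0 < poch (b+1) i) by (intros; apply poch_pos; lra).
  transitivity (binom (S n) 0 * (-1) ^ 0 * (poch a 0 / poch b 0) +
     sum_f_R0 (fun i => binom n (S i) * (-1) ^ S i * (poch a (S i) / poch b (S i))) n
     + sum_f_R0 (fun i => binom n i * (-1) ^ S i * (poch a (S i) / poch b (S i))) n).
  { rewrite Rplus_assoc, <- plus_sum. f_equal. apply sum_eq. intros i _.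
    simpl binom at 1. ring. }
  assert (E2 : sum_f_R0 (fun i => binom n i * (-1) ^ S i * (poch a (S i) / poch b (S i))) n
     = - (a / b * sum_f_R0 (fun k => binom n k * (-1) ^ k * (poch (a + 1) k / poch (b + 1) k)) n)).
  { rewrite Ropp_mult_distr_l, scal_sum. apply sum_eq. intros i _.
  rewrite !poch_S_l. simpl pow.
  assert (0 < poch (b+1) i) by auto. field. split; lra. }
  rewrite E2. replace (binom n 0) with 1 by (destruct n; reflexivity). simpl binom. ring.
Qed.

Lemma Vs_val n : forall a b, 0 < b -> Vs n a b = poch (b - a) n / poch b n.
Proof.
  induction n; intros a b Hb.
  - unfold Vs. simpl. field.
  - rewrite Vs_rec by auto. rewrite !IHn by lra.
    replace (b + 1 - (a + 1)) with (b - a) by ring.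
    assert (H1 : poch b (S n) = b * poch (b+1) n) by apply poch_S_l.
    assert (H2 : poch b (S n) = poch b n * (b + INR n)) by reflexivity.
    assert (0 < poch b n) by (apply poch_pos; auto).
    assert (0 < poch (b+1) n) by (apply poch_pos; lra).
    assert (0 <= INR n) by apply pos_INR.
    change (poch (b - a) (S n)) with (poch (b-a) n * (b - a + INR n)).
    assert (E : poch (b+1) n = poch b n * (b + INR n) / b).
    { apply (Rmult_eq_reg_l b); [|lra]. rewrite <- H1, H2. field. lra. }
    rewrite E, H2. field. repeat split; lra.
Qed.

Lemma exp_series x : is_series (fun k => x ^ k / INR (fact k)) (exp x).
Proof.
  eapply is_series_ext; [|apply (is_exp_Reals x)].
  intros k. rewrite pow_n_pow. unfold scal; simpl. unfold mult; simpl. unfold Rdiv. rewrite <- (pow_n_pow x k). reflexivity.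
Qed.

Lemma ratio_bound a b k : 0 < a -> 0 < b -> poch a k / poch b k <= (Rmax 1 (a/b)) ^ k.
Proof.
  intros Ha Hb. induction k.
  - simpl. lra.
  - simpl poch. simpl pow.
    assert (0 < poch a k) by (apply poch_pos; auto).
    assert (0 < poch b k) by (apply poch_pos; auto).
    assert (0 <= INR k) by apply pos_INR.
    assert (Hm : (a + INR k) / (b + INR k) <= Rmax 1 (a/b)).
    { destruct (Rle_dec a b).
      - apply Rle_trans with 1. apply Rmult_le_reg_r with (b + INR k). lra.
        unfold Rdiv. rewrite Rmult_assoc, Rinv_l by lra. lra. apply Rmax_l.
      - apply Rle_trans with (a/b); [|apply Rmax_r].
        unfold Rdiv. apply Rmult_le_reg_r with ((b + INR k) * b). nra.
        replace (a * / b * ((b + INR k) * b)) with (a * (b + INR k)) by (field; lra).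
        replace ((a + INR k) * / (b + INR k) * ((b + INR k) * b)) with ((a + INR k) * b) by (field; lra).
        nra. }
    replace (poch a k * (a + INR k) / (poch b k * (b + INR k))) with
      ((poch a k / poch b k) * ((a + INR k) / (b + INR k))) by (field; lra).
    assert (0 <= (a + INR k) / (b + INR k)) by (apply Rle_mult_inv_pos; lra).
    assert (0 <= poch a k / poch b k) by (apply Rle_mult_inv_pos; lra).
    rewrite Rmult_comm. apply Rmult_le_compat; auto.
Qed.

Lemma cauchy_term a b y n : 0 < a -> 0 < b ->
  sum_f_R0 (fun k => (poch a k / poch b k * ((-y) ^ k / INR (fact k))) *
                     (y ^ (n - k) / INR (fact (n - k)))) n
  = poch (b - a) n / poch b n * (y ^ n / INR (fact n)).
Proof.
  intros Ha Hb. rewrite <- Vs_val by auto. unfold Vs.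
  rewrite Rmult_comm, scal_sum. apply sum_eq. intros k Hk.
  assert (Hf := binom_fact n k Hk).
  assert (0 < INR (fact k)) by (apply lt_0_INR, lt_O_fact).
  assert (0 < INR (fact (n-k))) by (apply lt_0_INR, lt_O_fact).
  assert (0 < poch b k) by (apply poch_pos; auto).
  replace (binom n k) with (INR (fact n) / (INR (fact k) * INR (fact (n-k)))).
  2:{ rewrite <- Hf. field. lra. }
  replace (-y) with ((-1) * y) by ring. rewrite Rpow_mult_distr.
  replace (y ^ n) with (y ^ k * y ^ (n - k)).
  2:{ rewrite <- pow_add. f_equal. lia. }
  assert (0 < INR (fact n)) by (apply lt_0_INR, lt_O_fact).
  field. repeat split; lra.
Qed.

Lemma kummer_transform a b y : 0 < a -> 0 < b ->
  is_series (fun k => poch (b - a) k / poch b k * (y ^ k / INR (fact k)))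
    (exp y * Series (fun k => poch a k / poch b k * ((-y) ^ k / INR (fact k)))).
Proof.
  intros Ha Hb.
  set (A := fun k => poch a k / poch b k * ((-y) ^ k / INR (fact k))).
  set (B := fun k => y ^ k / INR (fact k)).
  assert (HA : ex_series (fun k => Rabs (A k))).
  { apply (@ex_series_le R_AbsRing R_CompleteNormedModule) with (fun k => (Rmax 1 (a/b) * Rabs y) ^ k / INR (fact k)).
    2:{ eexists; apply exp_series. }
    intros k. unfold norm; simpl. unfold abs; simpl. rewrite Rabs_Rabsolu.
    unfold A. assert (0 < poch a k) by (apply poch_pos; auto).
    assert (0 < poch b k) by (apply poch_pos; auto).
    assert (0 < INR (fact k)) by (apply lt_0_INR, lt_O_fact).
    rewrite Rabs_mult, Rabs_div, Rabs_div, <- RPow_abs, Rabs_Ropp by lra.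
    rewrite (Rabs_right (poch a k)), (Rabs_right (poch b k)), (Rabs_right (INR (fact k))) by lra.
    rewrite Rpow_mult_distr. unfold Rdiv. rewrite <- Rmult_assoc.
    apply Rmult_le_compat_r. left; apply Rinv_0_lt_compat; auto.
    apply Rmult_le_compat_r. apply pow_le, Rabs_pos.
    apply ratio_bound; auto. }
  assert (HB : ex_series (fun k => Rabs (B k))).
  { exists (exp (Rabs y)). eapply is_series_ext; [|apply exp_series].
    intros k. unfold B. assert (0 < INR (fact k)) by (apply lt_0_INR, lt_O_fact).
    rewrite Rabs_div, <- RPow_abs, (Rabs_right (INR (fact k))) by lra. reflexivity. }
  assert (HsA : is_series A (Series A)).
  { apply Series_correct. apply ex_series_Rabs. auto. }
  assert (HsB : is_series B (exp y)) by apply exp_series.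
  assert (H := is_series_mult A B _ _ HsA HsB HA HB).
  rewrite Rmult_comm.
  eapply is_series_ext; [|apply H].
  intros n. unfold A, B. apply cauchy_term; auto.
Qed.

Definition IR (f : R -> R) (l : R) : Prop :=
  (forall A B, 0 < A -> A <= B -> ex_RInt f A B) /\
  (forall u, 0 < u -> 0 <= f u) /\
  (forall A B, 0 < A -> A <= B -> RInt f A B <= l) /\
  (forall eps, 0 < eps -> exists A B, 0 < A /\ A <= B /\ l - eps < RInt f A B).

Definition IRp (p : R) (f : R -> R) (l : R) : Prop :=
  (forall B, p <= B -> ex_RInt f p B) /\
  (forall u, p < u -> 0 <= f u) /\
  (forall B, p <= B -> RInt f p B <= l) /\
  (forall eps, 0 < eps -> exists B, p <= B /\ l - eps < RInt f p B).

Lemma exC1 (f : R -> R) a b c : a <= b <= c -> ex_RInt f a c -> ex_RInt f a b.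
Proof. apply (@ex_RInt_Chasles_1 R_CompleteNormedModule). Qed.
Lemma exC2 (f : R -> R) a b c : a <= b <= c -> ex_RInt f a c -> ex_RInt f b c.
Proof. apply (@ex_RInt_Chasles_2 R_CompleteNormedModule). Qed.
Lemma exC (f : R -> R) a b c : ex_RInt f a b -> ex_RInt f b c -> ex_RInt f a c.
Proof. apply (@ex_RInt_Chasles R_NormedModule). Qed.
Lemma RC (f : R -> R) a b c : ex_RInt f a b -> ex_RInt f b c -> RInt f a b + RInt f b c = RInt f a c.
Proof. apply (@RInt_Chasles R_CompleteNormedModule). Qed.

Lemma RInt_correctR (f : R -> R) a b : ex_RInt f a b -> is_RInt f a b (RInt f a b).
Proof. apply (@RInt_correct R_CompleteNormedModule). Qed.

Lemma RInt_mono_AB f A' A B B' :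
  (forall u, A' < u -> u < B' -> 0 <= f u) ->
  ex_RInt f A' B' -> A' <= A -> A <= B -> B <= B' ->
  RInt f A B <= RInt f A' B'.
Proof.
  intros Hpos Hex h1 h2 h3.
  assert (E1 : ex_RInt f A' A) by (apply exC1 with B'; [lra|]; auto).
  assert (E2 : ex_RInt f A B') by (apply exC2 with A'; [lra|]; auto).
  assert (E3 : ex_RInt f A B) by (apply exC1 with B'; [lra|]; auto).
  assert (E4 : ex_RInt f B B') by (apply exC2 with A; [lra|]; auto).
  rewrite <- (RC f A' A B') by auto.
  rewrite <- (RC f A B B') by auto.
  assert (0 <= RInt f A' A) by (apply RInt_ge_0; auto; intros; apply Hpos; lra).
  assert (0 <= RInt f B B') by (apply RInt_ge_0; auto; intros; apply Hpos; lra).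
  lra.
Qed.

Lemma IR_near f l : IR f l -> forall eps, 0 < eps -> exists A0 B0, 0 < A0 /\ A0 <= B0 /\
  forall A B, 0 < A -> A <= A0 -> B0 <= B -> l - eps < RInt f A B.
Proof.
  intros [Hex [Hpos [Hup Happ]]] eps Heps.
  destruct (Happ eps Heps) as [A0 [B0 [h1 [h2 h3]]]].
  exists A0, B0. repeat split; auto. intros A B hA hA0 hB.
  eapply Rlt_le_trans; [apply h3|]. apply RInt_mono_AB; auto; try lra.
  intros; apply Hpos; lra. apply Hex; lra.
Qed.

Lemma IR_is_RInt_gen f l : IR f l -> is_RInt_gen f (at_right 0) (Rbar_locally p_infty) l.
Proof.
  intros H. assert (Hn := IR_near f l H).
  destruct H as [Hex [Hpos [Hup Happ]]].
  intros P [eps HP].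
  destruct (Hn eps (cond_pos eps)) as [A0 [B0 [h1 [h2 h3]]]].
  apply Filter_prod with (fun A => 0 < A /\ A < A0) (fun B => B0 < B).
  - exists (mkposreal A0 h1). intros u Hu Hu0. split; auto.
    unfold ball in Hu; simpl in Hu; unfold AbsRing_ball, abs, minus, plus, opp in Hu; simpl in Hu.
    rewrite Ropp_0, Rplus_0_r, Rabs_right in Hu by lra. auto.
  - exists B0. auto.
  - intros A B [hA hA0] hB. simpl. exists (RInt f A B). split.
    + apply RInt_correctR. apply Hex; lra.
    + apply HP. unfold ball; simpl; unfold AbsRing_ball, abs, minus, plus, opp; simpl.
      assert (RInt f A B <= l) by (apply Hup; lra).
      assert (l - eps < RInt f A B) by (apply h3; lra).
      rewrite Rabs_left1 by lra. lra.
Qed.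

Lemma IRp_is_RInt_gen p f l : IRp p f l -> is_RInt_gen f (at_point p) (Rbar_locally p_infty) l.
Proof.
  intros [Hex [Hpos [Hup Happ]]].
  intros P [eps HP].
  destruct (Happ eps (cond_pos eps)) as [B0 [h1 h2]].
  apply Filter_prod with (fun A => A = p) (fun B => B0 < B).
  - unfold at_point. reflexivity.
  - exists B0. auto.
  - intros A B -> hB. simpl. exists (RInt f p B). split.
    + apply RInt_correctR. apply Hex; lra.
    + apply HP. unfold ball; simpl; unfold AbsRing_ball, abs, minus, plus, opp; simpl.
      assert (RInt f p B <= l) by (apply Hup; lra).
      assert (RInt f p B0 <= RInt f p B).
      { apply RInt_mono_AB; try lra. intros; apply Hpos; lra. apply Hex; lra. }
      rewrite Rabs_left1 by lra. lra.
Qed.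

Lemma ex_RInt_scalR (f : R -> R) c a b : ex_RInt f a b -> ex_RInt (fun x => c * f x) a b.
Proof. intros H. apply (@ex_RInt_scal R_NormedModule) with (k := c) in H. exact H. Qed.

Lemma RInt_scalR (f : R -> R) c a b : ex_RInt f a b -> RInt (fun x => c * f x) a b = c * RInt f a b.
Proof. intros H. apply (@RInt_scal R_CompleteNormedModule) with (l := c) in H. exact H. Qed.

Lemma IR_exists f M :
  (forall A B, 0 < A -> A <= B -> ex_RInt f A B) ->
  (forall u, 0 < u -> 0 <= f u) ->
  (forall A B, 0 < A -> A <= B -> RInt f A B <= M) ->
  exists l, IR f l.
Proof.
  intros Hex Hpos Hb.
  set (E := fun v => exists A B, 0 < A /\ A <= B /\ v = RInt f A B).
  assert (HbE : bound E) by (exists M; intros v [A [B [h1 [h2 ->]]]]; auto).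
  assert (HnE : exists v, E v) by (exists (RInt f 1 1); exists 1, 1; repeat split; lra).
  destruct (completeness E HbE HnE) as [m [Hm1 Hm2]].
  exists m. repeat split; auto.
  - intros A B hA hAB. apply Hm1. exists A, B; auto.
  - intros eps Heps. apply NNPP. intros Hn.
    assert (m <= m - eps); [|lra].
    apply Hm2. intros v [A [B [h1 [h2 ->]]]].
    apply Rnot_lt_le. intros Hlt. apply Hn. exists A, B; auto.
Qed.

Lemma IRp_exists p f M :
  (forall B, p <= B -> ex_RInt f p B) ->
  (forall u, p < u -> 0 <= f u) ->
  (forall B, p <= B -> RInt f p B <= M) ->
  exists l, IRp p f l.
Proof.
  intros Hex Hpos Hb.
  set (E := fun v => exists B, p <= B /\ v = RInt f p B).
  assert (HbE : bound E) by (exists M; intros v [B [h1 ->]]; auto).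
  assert (HnE : exists v, E v) by (exists (RInt f p p); exists p; split; lra).
  destruct (completeness E HbE HnE) as [m [Hm1 Hm2]].
  exists m. repeat split; auto.
  - intros B hB. apply Hm1. exists B; auto.
  - intros eps Heps. apply NNPP. intros Hn.
    assert (m <= m - eps); [|lra].
    apply Hm2. intros v [B [h1 ->]].
    apply Rnot_lt_le. intros Hlt. apply Hn. exists B; auto.
Qed.

Lemma IR_le f g l1 l2 c : 0 <= c ->
  IR f l1 -> IR g l2 -> (forall u, 0 < u -> f u <= c * g u) -> l1 <= c * l2.
Proof.
  intros Hc [Hex1 [Hp1 [Hu1 Ha1]]] [Hex2 [Hp2 [Hu2 Ha2]]] Hle.
  apply Rnot_lt_le. intros Hlt.
  destruct (Ha1 (l1 - c * l2) ltac:(lra)) as [A [B [h1 [h2 h3]]]].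
  assert (RInt f A B <= c * RInt g A B).
  { rewrite <- RInt_scalR by auto. apply RInt_le; auto. apply ex_RInt_scalR; auto.
    intros; apply Hle; lra. }
  assert (c * RInt g A B <= c * l2) by (apply Rmult_le_compat_l; auto).
  lra.
Qed.

Lemma IR_unique f l1 l2 : IR f l1 -> IR f l2 -> l1 = l2.
Proof.
  intros H1 H2. apply Rle_antisym.
  - rewrite <- (Rmult_1_l l2). apply IR_le with f f; auto; try lra. intros; lra.
  - rewrite <- (Rmult_1_l l1). apply IR_le with f f; auto; try lra. intros; lra.
Qed.

Lemma IRp_le_IR p f g m l c : 0 < p -> 0 <= c ->
  IRp p g m -> IR f l -> (forall u, p < u -> g u <= c * f u) -> m <= c * l.
Proof.
  intros Hp Hc [Hex1 [Hp1 [Hu1 Ha1]]] [Hex2 [Hp2 [Hu2 Ha2]]] Hle.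
  apply Rnot_lt_le. intros Hlt.
  destruct (Ha1 (m - c * l) ltac:(lra)) as [B [h2 h3]].
  assert (RInt g p B <= c * RInt f p B).
  { rewrite <- RInt_scalR by (apply Hex2; lra). apply RInt_le; auto. apply ex_RInt_scalR; apply Hex2; lra.
    intros; apply Hle; lra. }
  assert (c * RInt f p B <= c * l) by (apply Rmult_le_compat_l; auto; apply Hu2; lra).
  lra.
Qed.

Lemma IR_ge0 f l : IR f l -> 0 <= l.
Proof.
  intros [Hex [Hp [Hu Ha]]]. apply Rle_trans with (RInt f 1 1).
  rewrite RInt_point. unfold zero; simpl; lra. apply Hu; lra.
Qed.

Lemma IRp_ge0 p f l : IRp p f l -> 0 <= l.
Proof.
  intros [Hex [Hp [Hu Ha]]]. apply Rle_trans with (RInt f p p).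
  rewrite RInt_point. unfold zero; simpl; lra. apply Hu; lra.
Qed.

Lemma contR (f : R -> R) x : ex_derive f x -> continuous f x.
Proof. apply (@ex_derive_continuous R_AbsRing R_NormedModule). Qed.

Definition gm (p u : R) : R := Rpower u p * exp (- (u ^ 2)).

Lemma gm_pos p u : 0 <= gm p u.
Proof. unfold gm, Rpower. apply Rmult_le_pos; left; apply exp_pos. Qed.

Lemma gm_cont p x : 0 < x -> continuous (gm p) x.
Proof. intros Hx. apply contR. unfold gm, Rpower. auto_derive. lra. Qed.

Lemma gm_ex p A B : 0 < A -> A <= B -> ex_RInt (gm p) A B.
Proof.
  intros hA hB. apply (@ex_RInt_continuous R_CompleteNormedModule).
  intros z Hz. rewrite Rmin_left, Rmax_right in Hz by lra. apply gm_cont. lra.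
Qed.

Lemma exp_pl (p x : R) : 0 < x -> exp ((p + 1) * ln x) = exp (p * ln x) * x.
Proof. intros. replace ((p+1) * ln x) with (p * ln x + ln x) by ring. rewrite exp_plus, exp_ln; auto. Qed.

Definition Eb (p t : R) : R := Rpower t (p + 1) * exp (- (t ^ 2)) / 2.

Lemma RInt_minusR (f g : R -> R) a b : ex_RInt f a b -> ex_RInt g a b ->
  RInt (fun x => f x - g x) a b = RInt f a b - RInt g a b.
Proof. intros H1 H2. apply (@RInt_minus R_CompleteNormedModule); auto. Qed.

Lemma gm_rec p A B : 0 < A -> A <= B ->
  RInt (gm (p + 2)) A B = (p + 1) / 2 * RInt (gm p) A B + (Eb p A - Eb p B).
Proof.
  intros hA hB.
  assert (H : is_RInt (fun t => gm (p+2) t - (p+1)/2 * gm p t) A B (Eb p A - Eb p B)).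
  { replace (Eb p A - Eb p B) with (minus (- Eb p B) (- Eb p A)) by (unfold minus, plus, opp; simpl; ring). apply (@is_RInt_derive R_CompleteNormedModule (fun t => - Eb p t) (fun t => gm (p+2) t - (p+1)/2 * gm p t)).
    - intros x Hx. rewrite Rmin_left, Rmax_right in Hx by lra.
      unfold gm, Eb, Rpower. auto_derive. lra.
      replace ((p+2) * ln x) with ((p+1) * ln x + ln x) by ring.
      rewrite exp_plus, exp_ln by lra. rewrite exp_pl by lra. replace (x * (x * 1)) with (x ^ 2) by ring.
      set (E1 := exp (p * ln x)). set (E2 := exp (- x ^ 2)). field. lra.
    - intros x Hx. rewrite Rmin_left, Rmax_right in Hx by lra.
      apply contR. unfold gm, Rpower. auto_derive. lra. }
  apply (@is_RInt_unique R_CompleteNormedModule) in H.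
  rewrite RInt_minusR, RInt_scalR in H.
  lra. apply gm_ex; auto. apply gm_ex; auto. apply ex_RInt_scalR, gm_ex; auto.
Qed.

Lemma exp_mono x y : x <= y -> exp x <= exp y.
Proof. intros [H|H]. left; apply exp_increasing; auto. subst; lra. Qed.

Lemma Rpower_le1 u p : 0 < u -> u <= 1 -> 0 <= p -> Rpower u p <= 1.
Proof.
  intros hu hu1 hp. unfold Rpower. rewrite <- exp_0. apply exp_mono.
  assert (ln u <= 0) by (rewrite <- ln_1; apply ln_le; lra). nra.
Qed.

Lemma nat_gt r : exists n : nat, r < INR n.
Proof. destruct (INR_archimed 1 r) as [n Hn]; try lra. exists n; lra. Qed.

Lemma exp_neg_bound u : exp (- u) <= 1 -> True. Proof. auto. Qed.

Lemma int_exp_neg A B : A <= B -> RInt (fun u => exp (- u)) A B = exp (- A) - exp (- B).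
Proof.
  intros hAB. apply (@is_RInt_unique R_CompleteNormedModule).
  replace (exp (- A) - exp (- B)) with (minus (- exp (- B)) (- exp (- A)))
    by (unfold minus, plus, opp; simpl; ring).
  apply (@is_RInt_derive R_CompleteNormedModule (fun u => - exp (- u)) (fun u => exp (- u))).
  - intros x _. auto_derive; auto. ring.
  - intros x _. apply contR. auto_derive; auto.
Qed.

Lemma ex_exp_neg A B : ex_RInt (fun u => exp (- u)) A B.
Proof.
  apply (@ex_RInt_continuous R_CompleteNormedModule). intros z _. apply contR. auto_derive; auto.
Qed.

Lemma gm_base_pt p u : 0 <= p <= 2 -> 0 < u -> gm p u <= 2 * exp (1/2) * exp (- u).
Proof.
  intros hp hu. unfold gm.
  assert (H1 : Rpower u p <= 1 + u ^ 2).
  { destruct (Rle_dec u 1).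
    - assert (Rpower u p <= 1) by (apply Rpower_le1; lra). nra.
    - apply Rle_trans with (Rpower u 2). apply Rle_Rpower; lra.
      replace 2 with (INR 2) by (simpl; ring). rewrite Rpower_pow by lra. nra. }
  assert (H2 : exp (- u ^ 2) = exp (- u ^ 2 / 2) * exp (- u ^ 2 / 2)).
  { rewrite <- exp_plus. f_equal. field. }
  assert (H3 : (1 + u ^ 2) * exp (- u ^ 2 / 2) <= 2).
  { assert (H4 := exp_ineq1_le (u ^ 2 / 2)).
    assert (H5 : exp (u ^ 2 / 2) * exp (- u ^ 2 / 2) = 1).
    { rewrite <- exp_plus. replace (u ^ 2 / 2 + - u ^ 2 / 2) with 0 by field. apply exp_0. }
    assert (0 < exp (- u ^ 2 / 2)) by apply exp_pos. nra. }
  assert (H6 : exp (- u ^ 2 / 2) <= exp (1/2) * exp (- u)).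
  { rewrite <- exp_plus. apply exp_mono. clear. assert (0 <= (u-1)*(u-1)) by apply Rle_0_sqr. simpl. lra. }
  assert (0 < exp (- u ^ 2 / 2)) by apply exp_pos.
  assert (0 <= Rpower u p) by (unfold Rpower; left; apply exp_pos).
  rewrite H2.
  apply Rle_trans with ((1 + u ^ 2) * exp (- u ^ 2 / 2) * exp (- u ^ 2 / 2)).
  { rewrite <- Rmult_assoc. apply Rmult_le_compat_r; [lra|]. apply Rmult_le_compat_r; lra. }
  apply Rle_trans with (2 * exp (- u ^ 2 / 2)). apply Rmult_le_compat_r; lra.
  lra.
Qed.

Lemma gm_bound_base p A B : 0 <= p <= 2 -> 0 < A -> A <= B ->
  RInt (gm p) A B <= 2 * exp (1/2).
Proof.
  intros hp hA hB.
  apply Rle_trans with (RInt (fun u => 2 * exp (1/2) * exp (- u)) A B).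
  { apply RInt_le; auto. apply gm_ex; auto. apply ex_RInt_scalR, ex_exp_neg.
    intros x Hx. apply gm_base_pt; lra. }
  rewrite RInt_scalR by apply ex_exp_neg. rewrite int_exp_neg by auto.
  assert (0 < exp (- B)) by apply exp_pos.
  assert (exp (- A) <= 1) by (rewrite <- exp_0; apply exp_mono; lra).
  assert (0 < exp (1/2)) by apply exp_pos.
  nra.
Qed.

Lemma Eb_pos p t : 0 <= Eb p t.
Proof. unfold Eb, Rpower. assert (0 < exp ((p+1) * ln t)) by apply exp_pos.
  assert (0 < exp (- t ^ 2)) by apply exp_pos. nra. Qed.

Lemma Eb_small0 p t : 0 <= p -> 0 < t -> t <= 1 -> Eb p t <= t / 2.
Proof.
  intros hp ht ht1. unfold Eb.
  assert (Rpower t (p + 1) = Rpower t p * t) by (unfold Rpower; apply exp_pl; auto).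
  assert (Rpower t p <= 1) by (apply Rpower_le1; lra).
  assert (0 <= Rpower t p) by (unfold Rpower; left; apply exp_pos).
  assert (exp (- t ^ 2) <= 1) by (rewrite <- exp_0; apply exp_mono; assert (0 <= t^2) by (apply pow_le; lra); lra).
  assert (0 < exp (- t ^ 2)) by apply exp_pos.
  rewrite H.
  assert (Rpower t p * t * exp (- t ^ 2) <= 1 * t * 1).
  { apply Rmult_le_compat; try lra. apply Rmult_le_pos; lra. apply Rmult_le_compat; lra. }
  lra.
Qed.

Lemma gm_bound_step p M : 0 <= p ->
  (forall A B, 0 < A -> A <= B -> RInt (gm p) A B <= M) ->
  forall A B, 0 < A -> A <= B -> RInt (gm (p + 2)) A B <= (p + 1) / 2 * M + 1/2.
Proof.
  intros hp HM A B hA hB.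
  set (A' := Rmin A 1). set (B' := Rmax B 1).
  assert (hA' : 0 < A' /\ A' <= A /\ A' <= 1) by (unfold A'; split; [apply Rmin_glb_lt|split; [apply Rmin_l|apply Rmin_r]]; lra).
  assert (hB' : B <= B' /\ 1 <= B') by (unfold B'; split; [apply Rmax_l|apply Rmax_r]).
  apply Rle_trans with (RInt (gm (p + 2)) A' B').
  { apply RInt_mono_AB; try lra. intros; apply gm_pos. apply gm_ex; lra. }
  rewrite gm_rec by lra.
  assert (RInt (gm p) A' B' <= M) by (apply HM; lra).
  assert (Eb p A' <= A' / 2) by (apply Eb_small0; lra).
  assert (0 <= Eb p B') by apply Eb_pos.
  assert (0 <= (p+1)/2) by lra.
  assert ((p + 1) / 2 * RInt (gm p) A' B' <= (p+1)/2 * M) by (apply Rmult_le_compat_l; auto).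
  lra.
Qed.

Lemma gm_bounded_m (m : nat) : forall p, 0 <= p <= 2 * INR m + 2 ->
  exists M, forall A B, 0 < A -> A <= B -> RInt (gm p) A B <= M.
Proof.
  induction m; intros p hp.
  - exists (2 * exp (1/2)). intros; apply gm_bound_base; auto. simpl in hp; lra.
  - destruct (Rle_dec p 2).
    + exists (2 * exp (1/2)). intros; apply gm_bound_base; auto. lra.
    + rewrite S_INR in hp. destruct (IHm (p - 2)) as [M HM]; [lra|].
      exists ((p - 2 + 1) / 2 * M + 1/2). intros A B hA hB.
      replace p with (p - 2 + 2) at 1 by ring. apply gm_bound_step; auto. lra.
Qed.

Lemma gm_IR_ex p : 0 <= p -> exists J, IR (gm p) J.
Proof.
  intros hp. destruct (nat_gt p) as [m Hm].
  destruct (gm_bounded_m m p) as [M HM]. assert (0 <= INR m) by apply pos_INR. lra.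
  apply IR_exists with M; auto. intros; apply gm_ex; auto. intros; apply gm_pos.
Qed.

Lemma exp_nat m y : exp (INR m * y) = exp y ^ m.
Proof.
  induction m. simpl. rewrite Rmult_0_l. apply exp_0.
  rewrite S_INR. replace ((INR m + 1) * y) with (INR m * y + y) by ring.
  rewrite exp_plus, IHm. simpl. ring.
Qed.

Lemma Eb_large p : 0 <= p -> forall eps, 0 < eps -> exists T, 1 <= T /\ forall t, T <= t -> Eb p t < eps.
Proof.
  intros hp eps heps. destruct (nat_gt (p + 1)) as [m Hm].
  set (K := INR m ^ m).
  assert (HmP : 0 < INR m) by lra.
  assert (HK : 0 < K) by (apply pow_lt; auto).
  exists (Rmax 1 (K / eps + 1)). split. apply Rmax_l.
  intros t Ht. assert (Ht1 : 1 <= t) by (eapply Rle_trans; [apply Rmax_l|eauto]).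
  assert (Ht2 : K / eps + 1 <= t) by (eapply Rle_trans; [apply Rmax_r|eauto]).
  assert (H1 : Rpower t (p + 1) <= t ^ m).
  { rewrite <- Rpower_pow by lra. apply Rle_Rpower; lra. }
  assert (H2 : (t ^ 2 / INR m) ^ m <= exp (t ^ 2)).
  { replace (t ^ 2) with (INR m * (t ^ 2 / INR m)) at 2 by (field; lra).
    rewrite exp_nat. apply pow_incr. split.
    apply Rle_mult_inv_pos; [apply pow_le; lra| auto].
    assert (H := exp_ineq1_le (t ^ 2 / INR m)). lra. }
  assert (H3 : (t ^ 2 / INR m) ^ m = t ^ m * t ^ m / K).
  { unfold K. unfold Rdiv. rewrite Rpow_mult_distr, <- pow_mult, pow_inv.
    replace (2 * m)%nat with (m + m)%nat by lia. rewrite pow_add. reflexivity. }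
  assert (Htm : 1 <= t ^ m) by (apply pow_R1_Rle; lra).
  assert (Htm' : t <= t ^ m).
  { destruct m. simpl in Hm; lra. replace (t ^ S m) with (t * t ^ m) by reflexivity.
    assert (1 <= t ^ m) by (apply pow_R1_Rle; lra). nra. }
  assert (H4 : exp (- t ^ 2) * exp (t ^ 2) = 1).
  { rewrite <- exp_plus. replace (- t ^ 2 + t ^ 2) with 0 by ring. apply exp_0. }
  assert (0 < exp (- t ^ 2)) by apply exp_pos.
  assert (0 <= Rpower t (p+1)) by (unfold Rpower; left; apply exp_pos).
  unfold Eb.
  (* Rpower t (p+1) * exp(-t^2) <= t^m * K / (t^m * t^m) = K / t^m <= K / t *)
  assert (H5 : exp (- t ^ 2) <= K / (t ^ m * t ^ m)).
  { rewrite H3 in H2. apply Rmult_le_reg_r with (t ^ m * t ^ m / K).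
    apply Rmult_lt_0_compat; [nra| apply Rinv_0_lt_compat; auto].
    replace (K / (t ^ m * t ^ m) * (t ^ m * t ^ m / K)) with 1 by (field; split; lra).
    rewrite <- H4. apply Rmult_le_compat_l; lra. }
  assert (H6 : Rpower t (p + 1) * exp (- t ^ 2) <= K / t).
  { apply Rle_trans with (t ^ m * (K / (t ^ m * t ^ m))).
    apply Rmult_le_compat; lra.
    replace (t ^ m * (K / (t ^ m * t ^ m))) with (K / t ^ m) by (field; lra).
    unfold Rdiv. apply Rmult_le_compat_l; [lra|]. apply Rinv_le_contravar; lra. }
  assert (H7 : K / t < eps).
  { apply Rmult_lt_reg_r with t; [lra|]. replace (K / t * t) with K by (field; lra).
    assert (HKe : K / eps < t) by lra.
    apply Rmult_lt_reg_r with (/ eps). apply Rinv_0_lt_compat; auto.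
    replace (eps * t * / eps) with t by (field; lra). exact HKe. }
  lra.
Qed.

Lemma gm_IR_rec p J : 0 <= p -> IR (gm p) J -> IR (gm (p + 2)) ((p + 1) / 2 * J).
Proof.
  intros hp HJ. assert (Hn := IR_near _ _ HJ).
  destruct HJ as [_ [_ [HJu HJa]]].
  split; [intros; apply gm_ex; auto|]. split; [intros; apply gm_pos|]. split.
  - intros A B hA hB. apply Rnot_lt_le. intros Hlt.
    set (d := RInt (gm (p + 2)) A B - (p + 1) / 2 * J).
    set (A' := Rmin A (Rmin 1 d)).
    assert (hA' : 0 < A' /\ A' <= A /\ A' <= 1 /\ A' <= d).
    { unfold A'. repeat split.
      apply Rmin_glb_lt; auto. apply Rmin_glb_lt; unfold d; lra.
      apply Rmin_l. eapply Rle_trans; [apply Rmin_r|apply Rmin_l].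
      eapply Rle_trans; [apply Rmin_r|apply Rmin_r]. }
    assert (RInt (gm (p + 2)) A B <= RInt (gm (p + 2)) A' B).
    { apply RInt_mono_AB; try lra. intros; apply gm_pos. apply gm_ex; lra. }
    rewrite (gm_rec p A' B) in H by lra.
    assert (RInt (gm p) A' B <= J) by (apply HJu; lra).
    assert (Eb p A' <= A' / 2) by (apply Eb_small0; lra).
    assert (0 <= Eb p B) by apply Eb_pos.
    assert ((p + 1) / 2 * RInt (gm p) A' B <= (p + 1) / 2 * J) by (apply Rmult_le_compat_l; lra).
    unfold d in hA'. lra.
  - intros eps heps.
    destruct (Hn (eps / (p + 1))) as [A0 [B0 [h1 [h2 h3]]]].
    { apply Rdiv_lt_0_compat; lra. }
    destruct (Eb_large p hp (eps / 2)) as [T [hT1 hT2]]; [lra|].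
    set (B := Rmax B0 T).
    assert (hB : B0 <= B /\ T <= B) by (unfold B; split; [apply Rmax_l|apply Rmax_r]).
    exists A0, B. split; auto. split; [lra|].
    rewrite gm_rec by lra.
    assert (J - eps / (p+1) < RInt (gm p) A0 B) by (apply h3; lra).
    assert (Eb p B < eps / 2) by (apply hT2; lra).
    assert (0 <= Eb p A0) by apply Eb_pos.
    assert ((p + 1) / 2 * (J - eps / (p+1)) <= (p + 1) / 2 * RInt (gm p) A0 B)
      by (apply Rmult_le_compat_l; lra).
    replace ((p + 1) / 2 * (J - eps / (p+1))) with ((p+1)/2 * J - eps / 2) in H2 by (field; lra).
    lra.
Qed.

Lemma gm_IR_iter q J k : 0 <= q -> IR (gm q) J ->
  IR (gm (q + 2 * INR k)) (poch ((q + 1) / 2) k * J).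
Proof.
  intros hq HJ. induction k.
  - simpl. replace (q + 2 * 0) with q by ring. replace (1 * J) with J by ring. auto.
  - rewrite S_INR. replace (q + 2 * (INR k + 1)) with ((q + 2 * INR k) + 2) by ring.
    simpl poch.
    replace (poch ((q + 1) / 2) k * ((q + 1) / 2 + INR k) * J)
      with ((q + 2 * INR k + 1) / 2 * (poch ((q + 1) / 2) k * J)) by (field).
    apply gm_IR_rec; auto. assert (0 <= INR k) by apply pos_INR. lra.
Qed.

Definition gam (a t : R) : R := Rpower t (a - 1) * exp (- t).

Lemma gam_cont a x : 0 < x -> continuous (gam a) x.
Proof. intros Hx. apply contR. unfold gam, Rpower. auto_derive. lra. Qed.

Lemma gam_ex a A B : 0 < A -> A <= B -> ex_RInt (gam a) A B.
Proof.
  intros hA hB. apply (@ex_RInt_continuous R_CompleteNormedModule).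
  intros z Hz. rewrite Rmin_left, Rmax_right in Hz by lra. apply gam_cont. lra.
Qed.

Lemma RInt_extR (f g : R -> R) a b : (forall x, Rmin a b < x < Rmax a b -> f x = g x) ->
  RInt f a b = RInt g a b.
Proof. apply (@RInt_ext R_CompleteNormedModule). Qed.

Lemma gam_subst a A B : 0 < A -> A <= B ->
  RInt (gam a) A B = 2 * RInt (gm (2 * a - 1)) (sqrt A) (sqrt B).
Proof.
  intros hA hB.
  assert (hsA : 0 < sqrt A) by (apply sqrt_lt_R0; auto).
  assert (hsB : sqrt A <= sqrt B) by (apply sqrt_le_1; lra).
  assert (H := @is_RInt_comp R_CompleteNormedModule (gam a) (fun u => u ^ 2) (fun u => 2 * u) (sqrt A) (sqrt B)).
  rewrite Rmin_left, Rmax_right in H by lra.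
  assert (H0 : is_RInt (fun y : R => scal (2 * y) (gam a (y ^ 2))) (sqrt A) (sqrt B) (RInt (gam a) A B)).
  { replace A with (sqrt A ^ 2) at 2 by (apply pow2_sqrt; lra).
    replace B with (sqrt B ^ 2) at 2 by (apply pow2_sqrt; lra).
    apply H.
    - intros x Hx. apply gam_cont. apply pow_lt. lra.
    - intros x Hx. split. auto_derive; auto. ring. apply contR. auto_derive; auto. }
  apply (@is_RInt_unique R_CompleteNormedModule) in H0. rewrite <- H0.
  rewrite <- RInt_scalR by (apply gm_ex; lra).
  apply RInt_extR. rewrite Rmin_left, Rmax_right by lra. intros x Hx.
  unfold scal; simpl; unfold mult; simpl. unfold gam, gm, Rpower.
  replace (x * (x * 1)) with (x ^ 2) by ring. rewrite ln_pow by lra.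
  replace ((2 * a - 1) * ln x) with ((a - 1) * (INR 2 * ln x) + ln x) by (simpl; ring).
  rewrite exp_plus, exp_ln by lra. ring.
Qed.

Lemma gam_IR a J : 1/2 <= a -> IR (gm (2 * a - 1)) J -> IR (gam a) (2 * J).
Proof.
  intros ha [Hex [Hpos [Hu Happ]]].
  split; [intros; apply gam_ex; auto|].
  split; [intros u hu; unfold gam, Rpower; apply Rmult_le_pos; left; apply exp_pos|].
  split.
  - intros A B hA hB. rewrite gam_subst by auto.
    assert (RInt (gm (2 * a - 1)) (sqrt A) (sqrt B) <= J).
    { apply Hu. apply sqrt_lt_R0; auto. apply sqrt_le_1; lra. }
    lra.
  - intros eps heps. destruct (Happ (eps / 2)) as [A [B [h1 [h2 h3]]]]; [lra|].
    exists (A ^ 2), (B ^ 2). split; [apply pow_lt; auto|]. split; [apply pow_incr; lra|].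
    rewrite gam_subst; [|apply pow_lt; auto|apply pow_incr; lra].
    rewrite !sqrt_pow2 by lra. lra.
Qed.

Lemma Gamma_val a J : 1/2 <= a -> IR (gm (2 * a - 1)) J -> Gamma a = 2 * J.
Proof.
  intros ha HJ. unfold Gamma.
  apply (@is_RInt_gen_unique R_CompleteNormedModule).
  apply Proper_StrongProper, at_right_proper_filter.
  apply Proper_StrongProper, Rbar_locally_filter.
  apply IR_is_RInt_gen. apply gam_IR; auto.
Qed.

Lemma ex_RInt_plusR (f g : R -> R) a b : ex_RInt f a b -> ex_RInt g a b ->
  ex_RInt (fun x => f x + g x) a b.
Proof. intros H1 H2. apply (@ex_RInt_plus R_NormedModule); auto. Qed.

Lemma RInt_plusR (f g : R -> R) a b : ex_RInt f a b -> ex_RInt g a b ->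
  RInt (fun x => f x + g x) a b = RInt f a b + RInt g a b.
Proof. intros H1 H2. apply (@RInt_plus R_CompleteNormedModule); auto. Qed.

Lemma RInt_constR (c a b : R) : RInt (fun _ => c) a b = (b - a) * c.
Proof. apply (@RInt_const R_CompleteNormedModule). Qed.

Lemma ex_RInt_constR (c a b : R) : ex_RInt (fun _ => c) a b.
Proof. apply (@ex_RInt_const R_NormedModule). Qed.

Lemma sum_RInt (g : nat -> R -> R) A B N : (forall k, ex_RInt (g k) A B) ->
  ex_RInt (fun u => sum_f_R0 (fun k => g k u) N) A B /\
  RInt (fun u => sum_f_R0 (fun k => g k u) N) A B = sum_f_R0 (fun k => RInt (g k) A B) N.
Proof.
  intros Hg. induction N.
  - simpl. split. exact (Hg 0%nat). reflexivity.
  - destruct IHN as [IH1 IH2]. simpl. split.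
    + apply ex_RInt_plusR; auto.
    + rewrite RInt_plusR; auto. rewrite IH2. reflexivity.
Qed.

Lemma series_partial_le (a : nat -> R) l N : is_series a l -> (forall k, 0 <= a k) ->
  sum_f_R0 a N <= l.
Proof.
  intros H Hp. apply is_series_Reals in H. apply sum_incr; auto.
Qed.

Lemma series_partial_near (a : nat -> R) l : is_series a l ->
  forall eps, 0 < eps -> exists N, forall n, (N <= n)%nat -> Rabs (sum_f_R0 a n - l) < eps.
Proof.
  intros H eps heps. apply is_series_Reals in H. destruct (H eps heps) as [N HN].
  exists N. intros n hn. apply HN. lia.
Qed.

Lemma finite_near (g : nat -> R -> R) (l : nat -> R) :
  (forall k, IR (g k) (l k)) -> forall N eps, 0 < eps -> exists A0 B0, 0 < A0 /\ A0 <= B0 /\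
  forall A B, 0 < A -> A <= A0 -> B0 <= B ->
    sum_f_R0 l N - eps < sum_f_R0 (fun k => RInt (g k) A B) N.
Proof.
  intros Hg N. induction N; intros eps heps.
  - simpl. apply IR_near; auto.
  - destruct (IHN (eps/2)) as [A1 [B1 [h1 [h2 h3]]]]; [lra|].
    destruct (IR_near _ _ (Hg (S N)) (eps/2)) as [A2 [B2 [k1 [k2 k3]]]]; [lra|].
    exists (Rmin A1 A2), (Rmax B1 B2).
    assert (Rmin A1 A2 <= A1) by apply Rmin_l. assert (Rmin A1 A2 <= A2) by apply Rmin_r.
    assert (B1 <= Rmax B1 B2) by apply Rmax_l. assert (B2 <= Rmax B1 B2) by apply Rmax_r.
    split. apply Rmin_glb_lt; auto. split. lra.
    intros A B hA hA0 hB. simpl.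
    assert (sum_f_R0 l N - eps/2 < sum_f_R0 (fun k => RInt (g k) A B) N) by (apply h3; lra).
    assert (l (S N) - eps/2 < RInt (g (S N)) A B) by (apply k3; lra).
    lra.
Qed.

Lemma IR_series (g : nat -> R -> R) (K : R -> R) (l : nat -> R) (L : R) :
  (forall k, IR (g k) (l k)) ->
  (forall u, 0 < u -> is_series (fun k => g k u) (K u)) ->
  is_series l L ->
  (forall A B, 0 < A -> A <= B -> ex_RInt K A B) ->
  (forall A B, 0 < A -> A <= B -> forall eps, 0 < eps -> exists N,
      forall u, A <= u <= B -> K u - sum_f_R0 (fun k => g k u) N <= eps) ->
  IR K L.
Proof.
  intros Hg HK HL Hex Htail.
  assert (Hgp : forall k u, 0 < u -> 0 <= g k u) by (intros k u hu; destruct (Hg k) as [_ [H _]]; auto).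
  assert (Hlp : forall k, 0 <= l k) by (intros k; apply (IR_ge0 _ _ (Hg k))).
  assert (Hgex : forall k A B, 0 < A -> A <= B -> ex_RInt (g k) A B) by (intros k; destruct (Hg k) as [H _]; auto).
  assert (HKp : forall u N, 0 < u -> sum_f_R0 (fun k => g k u) N <= K u).
  { intros u N hu. apply series_partial_le; auto. }
  split; auto. split.
  { intros u hu. apply Rle_trans with (sum_f_R0 (fun k => g k u) 0). simpl. auto. auto. }
  split.
  - intros A B hA hB. apply Rnot_lt_le. intros Hlt.
    set (d := RInt K A B - L).
    destruct (Htail A B hA hB (d / (B - A + 1))) as [N HN].
    { apply Rdiv_lt_0_compat; unfold d; lra. }
    destruct (sum_RInt g A B N) as [Hs1 Hs2]. intros k; apply Hgex; auto.
    assert (RInt K A B <= RInt (fun u => sum_f_R0 (fun k => g k u) N + d / (B - A + 1)) A B).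
    { apply RInt_le; auto. apply ex_RInt_plusR; auto. apply ex_RInt_constR.
      intros u hu. assert (H := HN u ltac:(lra)). lra. }
    rewrite RInt_plusR, Hs2, RInt_constR in H; auto; [|apply ex_RInt_constR].
    assert (sum_f_R0 (fun k => RInt (g k) A B) N <= sum_f_R0 l N).
    { apply sum_Rle. intros k _. destruct (Hg k) as [_ [_ [Hu _]]]. apply Hu; auto. }
    assert (sum_f_R0 l N <= L) by (apply series_partial_le; auto).
    assert ((B - A) * (d / (B - A + 1)) < d).
    { unfold d in *. apply Rmult_lt_reg_r with (B - A + 1). lra.
      replace ((B - A) * ((RInt K A B - L) / (B - A + 1)) * (B - A + 1)) with ((B - A) * (RInt K A B - L)) by (field; lra).
      nra. }
    unfold d in *. lra.
  - intros eps heps.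
    destruct (series_partial_near l L HL (eps/2)) as [N HN]; [lra|].
    assert (HN' := HN N (le_n N)).
    destruct (finite_near g l Hg N (eps/2)) as [A0 [B0 [h1 [h2 h3]]]]; [lra|].
    exists A0, B0. split; auto. split; auto.
    destruct (sum_RInt g A0 B0 N) as [Hs1 Hs2]. intros k; apply Hgex; auto.
    assert (RInt (fun u => sum_f_R0 (fun k => g k u) N) A0 B0 <= RInt K A0 B0).
    { apply RInt_le; auto. intros u hu. apply HKp. lra. }
    assert (sum_f_R0 l N - eps/2 < sum_f_R0 (fun k => RInt (g k) A0 B0) N) by (apply h3; lra).
    rewrite Rabs_lt_between in HN'. lra.
Qed.

Definition fco (b : R) (k : nat) : R := / (poch b k * INR (fact k)).
Definition fser (b z : R) : R := PSeries (fco b) z.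

Lemma fact_pos k : 0 < INR (fact k).
Proof. apply lt_0_INR, lt_O_fact. Qed.

Lemma fco_pos b k : 0 < b -> 0 < fco b k.
Proof. intros hb. unfold fco. apply Rinv_0_lt_compat, Rmult_lt_0_compat. apply poch_pos; auto. apply fact_pos. Qed.

Lemma poch_ge_pow b k : 0 < b -> b ^ k <= poch b k.
Proof.
  intros hb. induction k. simpl; lra. simpl.
  assert (0 <= INR k) by apply pos_INR. rewrite Rmult_comm.
  apply Rmult_le_compat; try lra. apply pow_le; lra.
Qed.

Lemma fco_abs_bound b k z : 0 < b -> Rabs (fco b k * z ^ k) <= (Rabs z / b) ^ k / INR (fact k).
Proof.
  intros hb. rewrite Rabs_mult, Rabs_right by (left; apply fco_pos; auto).
  rewrite <- RPow_abs. unfold fco, Rdiv. rewrite Rpow_mult_distr, pow_inv.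
  assert (0 < b ^ k) by (apply pow_lt; auto).
  assert (b ^ k <= poch b k) by (apply poch_ge_pow; auto).
  assert (0 < INR (fact k)) by apply fact_pos.
  assert (0 <= Rabs z ^ k) by (apply pow_le, Rabs_pos).
  rewrite Rinv_mult.
  replace (/ poch b k * / INR (fact k) * Rabs z ^ k) with (Rabs z ^ k * / poch b k * / INR (fact k)) by ring.
  apply Rmult_le_compat_r. left; apply Rinv_0_lt_compat; auto.
  apply Rmult_le_compat_l; auto. apply Rinv_le_contravar; auto.
Qed.

Lemma fco_abs_ex b z : 0 < b -> ex_series (fun k => Rabs (fco b k * z ^ k)).
Proof.
  intros hb. apply (@ex_series_le R_AbsRing R_CompleteNormedModule) with (fun k => (Rabs z / b) ^ k / INR (fact k)).
  2:{ eexists; apply exp_series. }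
  intros k. unfold norm; simpl. unfold abs; simpl. rewrite Rabs_Rabsolu. apply fco_abs_bound; auto.
Qed.

Lemma fser_series b z : 0 < b -> is_series (fun k => fco b k * z ^ k) (fser b z).
Proof. intros hb. apply Series_correct. apply ex_series_Rabs. apply fco_abs_ex; auto. Qed.

Lemma disk_rad a x : CV_disk a x -> Rbar_le x (CV_radius a).
Proof. intros H. unfold CV_radius. destruct (Lub_Rbar_correct (CV_disk a)) as [H1 H2]. apply H1. auto. Qed.

Lemma fser_cont b z : 0 < b -> continuous (fser b) z.
Proof.
  intros hb. apply continuity_pt_filterlim. apply PSeries_continuity.
  assert (H : Rbar_le (Rabs z + 1) (CV_radius (fco b))).
  { apply disk_rad. unfold CV_disk. apply fco_abs_ex; auto. }
  destruct (CV_radius (fco b)); simpl in *; auto. lra.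
Qed.

Lemma fser_tail b z Z N : 0 < b -> 0 <= z -> z <= Z ->
  fser b z - sum_f_R0 (fun k => fco b k * z ^ k) N <= fser b Z - sum_f_R0 (fun k => fco b k * Z ^ k) N.
Proof.
  intros hb hz hZ.
  assert (Ez : ex_series (fun k => fco b k * z ^ k)) by (eexists; apply fser_series; auto).
  assert (EZ : ex_series (fun k => fco b k * Z ^ k)) by (eexists; apply fser_series; auto).
  unfold fser, PSeries.
  rewrite (Series_incr_n _ (S N)) by (auto; lia).
  rewrite (Series_incr_n (fun k => fco b k * Z ^ k) (S N)) by (auto; lia).
  simpl Nat.pred.
  assert (Series (fun k => fco b (S N + k) * z ^ (S N + k)) <= Series (fun k => fco b (S N + k) * Z ^ (S N + k))).
  { apply Series_le.
    - intros k. assert (0 < fco b (S N + k)) by (apply fco_pos; auto). split.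
      apply Rmult_le_pos; [lra| apply pow_le; auto].
      apply Rmult_le_compat_l; [lra|]. apply pow_incr; lra.
    - apply (ex_series_incr_n (fun k => fco b k * Z ^ k) (S N)). auto. }
  lra.
Qed.

Lemma fser_partial_le b z N : 0 < b -> 0 <= z -> sum_f_R0 (fun k => fco b k * z ^ k) N <= fser b z.
Proof.
  intros hb hz. apply series_partial_le. apply fser_series; auto.
  intros k. apply Rmult_le_pos. left; apply fco_pos; auto. apply pow_le; auto.
Qed.

Lemma fser_nonneg b z : 0 < b -> 0 <= z -> 0 <= fser b z.
Proof.
  intros hb hz. apply Rle_trans with (sum_f_R0 (fun k => fco b k * z ^ k) 0).
  simpl. rewrite Rmult_1_r. left; apply fco_pos; auto. apply fser_partial_le; auto.
Qed.

Lemma fser_mono b z Z : 0 < b -> 0 <= z -> z <= Z -> fser b z <= fser b Z.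
Proof.
  intros hb hz hZ. assert (H := fser_tail b z Z 0 hb hz hZ). simpl in H.
  assert (0 <= z) by auto. assert (fco b 0 * 1 >= 0). { rewrite Rmult_1_r. left. apply fco_pos; auto. }
  lra.
Qed.

Lemma contR_mult (f g : R -> R) x : continuous f x -> continuous g x -> continuous (fun u => f u * g u) x.
Proof. intros H1 H2. apply (@continuous_mult R_UniformSpace R_AbsRing f g x H1 H2). Qed.

Lemma contR_comp (f g : R -> R) x : continuous f x -> continuous g (f x) -> continuous (fun u => g (f u)) x.
Proof. intros H1 H2. apply (@continuous_comp R_UniformSpace R_UniformSpace R_UniformSpace f g x H1 H2). Qed.

Lemma IR_ext f g l : (forall u, 0 < u -> f u = g u) -> IR f l -> IR g l.
Proof.
  intros He [Hex [Hp [Hu Ha]]].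
  assert (Hr : forall A B, 0 < A -> A <= B -> RInt f A B = RInt g A B).
  { intros A B hA hB. apply RInt_extR. intros x Hx. rewrite Rmin_left, Rmax_right in Hx by lra.
    apply He; lra. }
  split; [|split; [|split]].
  - intros A B hA hB. apply (@ex_RInt_ext R_NormedModule) with f; auto.
    intros x Hx. rewrite Rmin_left, Rmax_right in Hx by lra. apply He; lra.
  - intros u hu. rewrite <- He; auto.
  - intros A B hA hB. rewrite <- Hr; auto.
  - intros eps heps. destruct (Ha eps heps) as [A [B [h1 [h2 h3]]]]. exists A, B.
    rewrite <- Hr; auto.
Qed.

Lemma IR_scal c f l : 0 <= c -> IR f l -> IR (fun u => c * f u) (c * l).
Proof.
  intros hc [Hex [Hp [Hu Ha]]].
  split; [|split; [|split]].
  - intros; apply ex_RInt_scalR; auto.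
  - intros u hu. apply Rmult_le_pos; auto.
  - intros A B hA hB. rewrite RInt_scalR by auto. apply Rmult_le_compat_l; auto.
  - intros eps heps. destruct (Rle_lt_or_eq_dec 0 c hc) as [hc'|hc'].
    + destruct (Ha (eps / c)) as [A [B [h1 [h2 h3]]]]. apply Rdiv_lt_0_compat; auto.
      exists A, B. split; auto. split; auto. rewrite RInt_scalR by auto.
      apply Rmult_lt_compat_l with (r := c) in h3; auto.
      replace (c * (l - eps / c)) with (c * l - eps) in h3 by (field; lra). lra.
    + subst c. exists 1, 1. split; [lra|split; [lra|]]. rewrite RInt_point. unfold zero; simpl. lra.
Qed.

Definition Kf (a b x u : R) : R := 2 * gm (2 * a - 1) u * fser b (x * u ^ 2).

Definition phi (a b x : R) (k : nat) : R := poch a k / poch b k * (x ^ k / INR (fact k)).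

Lemma phi_series a b x : 0 < a -> 0 < b -> 0 <= x -> ex_series (phi a b x).
Proof.
  intros ha hb hx.
  apply (@ex_series_le R_AbsRing R_CompleteNormedModule) with (fun k => (Rmax 1 (a/b) * x) ^ k / INR (fact k)).
  2:{ eexists; apply exp_series. }
  intros k. unfold norm; simpl. unfold abs; simpl. unfold phi.
  assert (0 < poch a k) by (apply poch_pos; auto).
  assert (0 < poch b k) by (apply poch_pos; auto).
  assert (0 < INR (fact k)) by apply fact_pos.
  assert (0 <= x ^ k) by (apply pow_le; auto).
  rewrite Rabs_right.
  2:{ apply Rle_ge, Rmult_le_pos; apply Rle_mult_inv_pos; lra. }
  rewrite Rpow_mult_distr. unfold Rdiv. rewrite <- Rmult_assoc.
  apply Rmult_le_compat_r. left; apply Rinv_0_lt_compat; auto.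
  apply Rmult_le_compat_r. auto. apply ratio_bound; auto.
Qed.

Lemma gm_shift q k u : 0 < u -> gm q u * (u ^ 2) ^ k = gm (q + 2 * INR k) u.
Proof.
  intros hu. unfold gm. rewrite Rpower_plus.
  rewrite <- Rpower_mult.
  replace (Rpower u 2) with (u ^ 2) by (replace 2 with (INR 2) by (simpl; ring); rewrite Rpower_pow; auto).
  rewrite Rpower_pow by (apply pow_lt; auto). ring.
Qed.

Lemma Kf_IR a b x J : 1/2 <= a -> 0 < b -> 0 <= x -> IR (gm (2 * a - 1)) J ->
  IR (Kf a b x) (2 * J * Series (phi a b x)).
Proof.
  intros ha hb hx HJ.
  set (g := fun k u => 2 * gm (2 * a - 1) u * (fco b k * (x * u ^ 2) ^ k)).
  set (l := fun k => 2 * J * phi a b x k).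
  assert (Hpa : 0 < a) by lra.
  apply IR_series with g l.
  - intros k. apply IR_ext with (fun u => (2 * fco b k * x ^ k) * gm (2 * a - 1 + 2 * INR k) u).
    { intros u hu. unfold g. rewrite <- gm_shift by auto. rewrite Rpow_mult_distr. ring. }
    replace (l k) with ((2 * fco b k * x ^ k) * (poch ((2 * a - 1 + 1) / 2) k * J)).
    2:{ unfold l, phi, fco. replace ((2 * a - 1 + 1) / 2) with a by field.
        assert (0 < poch b k) by (apply poch_pos; auto). assert (0 < INR (fact k)) by apply fact_pos.
        field. lra. }
    apply IR_scal. assert (0 < fco b k) by (apply fco_pos; auto). assert (0 <= x ^ k) by (apply pow_le; auto).
    nra.
    apply gm_IR_iter; auto. lra.
  - intros u hu. unfold Kf, g.
    assert (H := fser_series b (x * u ^ 2) hb).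
    apply (is_series_scal_l (2 * gm (2 * a - 1) u)) in H.
    eapply is_series_ext; [|apply H]. intros k. reflexivity.
  - unfold l. assert (H := Series_correct _ (phi_series a b x Hpa hb hx)).
    apply (is_series_scal_l (2 * J)) in H. exact H.
  - intros A B hA hB. apply (@ex_RInt_continuous R_CompleteNormedModule).
    intros z Hz. rewrite Rmin_left, Rmax_right in Hz by lra. unfold Kf.
    apply contR_mult. apply contR_mult. apply contR; auto_derive; auto. apply gm_cont; lra.
    apply contR_comp with (f := fun u => x * u ^ 2). apply contR; auto_derive; auto.
    apply fser_cont; auto.
  - intros A B hA hB eps heps.
    set (Z := x * B ^ 2).
    set (M := 2 * Rpower B (2 * a - 1) + 1).
    assert (hM : 0 < M) by (unfold M, Rpower; assert (0 < exp ((2 * a - 1) * ln B)) by apply exp_pos; lra).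
    destruct (series_partial_near _ _ (fser_series b Z hb) (eps / M)) as [N HN].
    { apply Rdiv_lt_0_compat; auto. }
    exists N. intros u hu.
    assert (HN' := HN N (le_n N)).
    assert (Hsum : sum_f_R0 (fun k => g k u) N = 2 * gm (2 * a - 1) u * sum_f_R0 (fun k => fco b k * (x * u ^ 2) ^ k) N).
    { rewrite scal_sum. apply sum_eq. intros i _. unfold g. ring. }
    rewrite Hsum. unfold Kf.
    assert (hz : 0 <= x * u ^ 2) by (apply Rmult_le_pos; auto; apply pow_le; lra).
    assert (hzZ : x * u ^ 2 <= Z) by (unfold Z; apply Rmult_le_compat_l; auto; apply pow_incr; lra).
    assert (Ht := fser_tail b (x * u ^ 2) Z N hb hz hzZ).
    assert (Ht0 : 0 <= fser b (x * u ^ 2) - sum_f_R0 (fun k => fco b k * (x * u ^ 2) ^ k) N)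
      by (assert (H := fser_partial_le b (x * u ^ 2) N hb hz); lra).
    rewrite Rabs_lt_between in HN'.
    assert (hgm : gm (2 * a - 1) u <= Rpower B (2 * a - 1)).
    { unfold gm. assert (Rpower u (2 * a - 1) <= Rpower B (2 * a - 1)) by (apply Rle_Rpower_l; lra).
      assert (exp (- u ^ 2) <= 1) by (rewrite <- exp_0; apply exp_mono; assert (0 <= u ^ 2) by (apply pow_le; lra); lra).
      assert (0 <= Rpower u (2 * a - 1)) by (unfold Rpower; left; apply exp_pos).
      assert (0 < exp (- u ^ 2)) by apply exp_pos. nra. }
    assert (0 <= gm (2 * a - 1) u) by apply gm_pos.
    set (T := fser b (x * u ^ 2) - sum_f_R0 (fun k => fco b k * (x * u ^ 2) ^ k) N) in *.
    replace (2 * gm (2 * a - 1) u * fser b (x * u ^ 2) -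
      2 * gm (2 * a - 1) u * sum_f_R0 (fun k => fco b k * (x * u ^ 2) ^ k) N) with (2 * gm (2 * a - 1) u * T) by (unfold T; ring).
    assert (T <= eps / M) by (fold Z in Ht; lra).
    apply Rle_trans with (2 * Rpower B (2 * a - 1) * (eps / M)).
    { apply Rmult_le_compat; nra. }
    apply Rle_trans with (M * (eps / M)).
    { apply Rmult_le_compat_r. left; apply Rdiv_lt_0_compat; auto. unfold M; lra. }
    right. field. lra.
Qed.

Lemma ln_le_m1 t : 0 < t -> ln t <= t - 1.
Proof. intros ht. assert (H := exp_ineq1_le (ln t)). rewrite exp_ln in H; lra. Qed.

Lemma Rpower_pos X d : 0 < Rpower X d.
Proof. unfold Rpower; apply exp_pos. Qed.

Lemma tangent X m d : 0 < X -> 0 < m -> 0 <= d ->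
  Rpower m (- d) * (1 - d * (X / m - 1)) <= Rpower X (- d).
Proof.
  intros hX hm hd.
  assert (E : Rpower X (- d) = Rpower m (- d) * Rpower (X / m) (- d)).
  { rewrite Rpower_mult_distr; [|auto|apply Rdiv_lt_0_compat; auto]. f_equal. field. lra. }
  rewrite E. apply Rmult_le_compat_l. left; apply Rpower_pos.
  assert (0 < X / m) by (apply Rdiv_lt_0_compat; auto).
  unfold Rpower. assert (H1 := exp_ineq1_le (- d * ln (X / m))).
  assert (H2 := ln_le_m1 (X / m) H). nra.
Qed.

Lemma Rpower_inv X d : 0 < X -> Rpower X d * Rpower X (- d) = 1.
Proof. intros. rewrite <- Rpower_plus. replace (d + - d) with 0 by ring. apply Rpower_O; auto. Qed.

Definition rr (b : R) (k : nat) : R := poch (1/2) k / poch b k.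

Lemma rr_S b k : 0 < b -> rr b (S k) = rr b k * ((1/2 + INR k) / (b + INR k)).
Proof.
  intros hb. unfold rr. simpl. assert (0 < poch b k) by (apply poch_pos; auto).
  assert (0 <= INR k) by apply pos_INR. field. lra.
Qed.

Lemma rr_pos b k : 0 < b -> 0 < rr b k.
Proof. intros hb. unfold rr. apply Rdiv_lt_0_compat; apply poch_pos; lra. Qed.

Lemma Rpower_neg_anti X Y d : 0 < X -> X <= Y -> 0 <= d -> Rpower Y (- d) <= Rpower X (- d).
Proof.
  intros hX hXY hd. rewrite !Rpower_Ropp. apply Rinv_le_contravar. apply Rpower_pos.
  apply Rle_Rpower_l; lra.
Qed.

Lemma rr_up_aux b : 1/2 <= b <= 1 -> forall k, rr b k * Rpower (INR k + b) (b - 1/2) <= Rpower b (b - 1/2).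
Proof.
  intros hb k. set (d := b - 1/2). assert (hd : 0 <= d) by (unfold d; lra).
  induction k.
  - unfold rr. simpl. replace (0 + b) with b by ring. lra.
  - rewrite rr_S by lra. rewrite S_INR.
    set (X := INR k + 1 + b). set (m := INR k + b).
    assert (hk : 0 <= INR k) by apply pos_INR.
    assert (hm : 0 < m) by (unfold m; lra). assert (hX : 0 < X) by (unfold X; lra).
    assert (T := tangent X m d hX hm hd).
    replace (1 - d * (X / m - 1)) with ((1/2 + INR k) / (b + INR k)) in T
      by (unfold X, m, d; field; lra).
    assert (T2 : Rpower X d * ((1 / 2 + INR k) / (b + INR k)) <= Rpower m d).
    { assert (H1 := Rpower_inv X d hX). assert (H2 := Rpower_inv m d hm).
      assert (0 < Rpower X d) by apply Rpower_pos. assert (0 < Rpower m d) by apply Rpower_pos.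
      apply Rmult_le_compat_l with (r := Rpower X d * Rpower m d) in T; [|nra].
      replace (Rpower X d * Rpower m d * (Rpower m (- d) * ((1 / 2 + INR k) / (b + INR k))))
        with (Rpower X d * ((1 / 2 + INR k) / (b + INR k)) * (Rpower m d * Rpower m (- d))) in T by ring.
      replace (Rpower X d * Rpower m d * Rpower X (- d)) with (Rpower m d * (Rpower X d * Rpower X (- d))) in T by ring.
      rewrite H1, H2 in T. lra. }
    assert (0 < rr b k) by (apply rr_pos; lra).
    apply Rle_trans with (rr b k * Rpower m d); [|exact IHk].
    rewrite Rmult_assoc. apply Rmult_le_compat_l; lra.
Qed.

Lemma rr_upper b k : 1/2 <= b <= 1 -> rr b k <= Rpower (INR k + 1) (- (b - 1/2)).
Proof.
  intros hb. set (d := b - 1/2). assert (hd : 0 <= d) by (unfold d; lra).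
  assert (H := rr_up_aux b hb k). fold d in H.
  assert (hk : 0 <= INR k) by apply pos_INR.
  assert (H1 := Rpower_inv (INR k + b) d ltac:(lra)).
  assert (0 < Rpower (INR k + b) (- d)) by apply Rpower_pos.
  apply Rmult_le_compat_r with (r := Rpower (INR k + b) (- d)) in H; [|lra].
  rewrite Rmult_assoc, H1, Rmult_1_r in H.
  eapply Rle_trans; [apply H|].
  replace (Rpower b d * Rpower (INR k + b) (- d)) with (Rpower ((INR k + b) / b) (- d)).
  - apply Rpower_neg_anti; auto. lra.
    apply Rmult_le_reg_r with b; [lra|]. unfold Rdiv. rewrite Rmult_assoc, Rinv_l by lra. nra.
  - unfold Rdiv. rewrite <- Rpower_mult_distr by (try apply Rinv_0_lt_compat; lra).
    rewrite Rmult_comm. f_equal.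
    replace (/ b) with (Rpower b (-1)).
    rewrite Rpower_mult. replace (-1 * - d) with d by ring. reflexivity.
    replace (-1) with (- (1)) by ring. rewrite Rpower_Ropp, Rpower_1; lra.
Qed.

Definition rho (b : R) : R := / (2 * b) * Rpower (1/2) (b - 1/2).

Lemma rr_low_aux b : 1/2 <= b <= 1 -> forall j, rho b <= rr b (S j) * Rpower (INR j + 1/2) (b - 1/2).
Proof.
  intros hb j. set (d := b - 1/2). assert (hd : 0 <= d) by (unfold d; lra).
  induction j.
  - rewrite rr_S by lra. unfold rr, rho. simpl. replace (0 + 1/2) with (1/2) by ring. fold d.
    right. field. lra.
  - rewrite (rr_S b (S j)) by lra. rewrite !S_INR.
    set (X := INR j + 1/2). set (m := INR j + 1 + 1/2).
    assert (hk : 0 <= INR j) by apply pos_INR.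
    assert (hm : 0 < m) by (unfold m; lra). assert (hX : 0 < X) by (unfold X; lra).
    assert (T := tangent X m d hX hm hd).
    replace (1 - d * (X / m - 1)) with ((b + (INR j + 1)) / (1/2 + (INR j + 1))) in T
      by (unfold X, m, d; field; lra).
    assert (T2 : Rpower X d * ((b + (INR j + 1)) / (1/2 + (INR j + 1))) <= Rpower m d).
    { assert (H1 := Rpower_inv X d hX). assert (H2 := Rpower_inv m d hm).
      assert (0 < Rpower X d) by apply Rpower_pos. assert (0 < Rpower m d) by apply Rpower_pos.
      apply Rmult_le_compat_l with (r := Rpower X d * Rpower m d) in T; [|nra].
      replace (Rpower X d * Rpower m d * (Rpower m (- d) * ((b + (INR j + 1)) / (1/2 + (INR j + 1)))))
        with (Rpower X d * ((b + (INR j + 1)) / (1/2 + (INR j + 1))) * (Rpower m d * Rpower m (- d))) in T by ring.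
      replace (Rpower X d * Rpower m d * Rpower X (- d)) with (Rpower m d * (Rpower X d * Rpower X (- d))) in T by ring.
      rewrite H1, H2 in T. lra. }
    assert (0 < rr b (S j)) by (apply rr_pos; lra).
    replace (INR j + 1 + 1 / 2) with m by (unfold m; ring).
    eapply Rle_trans; [exact IHj|]. fold X.
    replace (rr b (S j) * ((1 / 2 + (INR j + 1)) / (b + (INR j + 1))) * Rpower m d)
      with (rr b (S j) * (Rpower m d * ((1 / 2 + (INR j + 1)) / (b + (INR j + 1))))) by ring.
    apply Rmult_le_compat_l; [lra|].
    apply Rmult_le_reg_r with ((b + (INR j + 1)) / (1/2 + (INR j + 1))).
    apply Rdiv_lt_0_compat; lra.
    replace (Rpower m d * ((1 / 2 + (INR j + 1)) / (b + (INR j + 1))) * ((b + (INR j + 1)) / (1 / 2 + (INR j + 1))))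
      with (Rpower m d) by (field; lra). exact T2.
Qed.

Lemma rho_pos b : 1/2 <= b -> 0 < rho b.
Proof. intros hb. unfold rho. apply Rmult_lt_0_compat. apply Rinv_0_lt_compat; lra. apply Rpower_pos. Qed.

Lemma rr_lower b k : 1/2 <= b <= 1 -> rho b * Rpower (INR k + 1) (- (b - 1/2)) <= rr b k.
Proof.
  intros hb. set (d := b - 1/2). assert (hd : 0 <= d) by (unfold d; lra).
  destruct k.
  - unfold rr. simpl. replace (0 + 1) with 1 by ring. rewrite Rpower_Ropp. replace (Rpower 1 d) with 1 by (unfold Rpower; rewrite ln_1, Rmult_0_r, exp_0; auto).
    unfold rho. assert (Rpower (1/2) (b - 1/2) <= 1) by (apply Rpower_le1; lra).
    assert (0 < Rpower (1/2) (b - 1/2)) by apply Rpower_pos.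
    assert (/ (2 * b) <= 1) by (rewrite <- Rinv_1; apply Rinv_le_contravar; lra).
    assert (0 < / (2 * b)) by (apply Rinv_0_lt_compat; lra).
    rewrite Rinv_1. nra.
  - assert (H := rr_low_aux b hb k). fold d in H.
    assert (hk : 0 <= INR k) by apply pos_INR.
    assert (H1 := Rpower_inv (INR k + 1/2) d ltac:(lra)).
    assert (0 < Rpower (INR k + 1/2) (- d)) by apply Rpower_pos.
    apply Rmult_le_compat_r with (r := Rpower (INR k + 1/2) (- d)) in H; [|lra].
    rewrite Rmult_assoc, H1, Rmult_1_r in H.
    eapply Rle_trans; [|apply H].
    apply Rmult_le_compat_l. left; apply rho_pos; lra.
    apply Rpower_neg_anti; auto. lra. rewrite S_INR. lra.
Qed.

Lemma sum_lin (f g : nat -> R) (c1 c2 : R) N :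
  sum_f_R0 (fun k => c1 * f k - c2 * g k) N = c1 * sum_f_R0 f N - c2 * sum_f_R0 g N.
Proof. induction N. simpl. ring. simpl. rewrite IHN. ring. Qed.

Lemma sum_scal_l (f : nat -> R) c N : sum_f_R0 (fun k => c * f k) N = c * sum_f_R0 f N.
Proof. induction N. simpl. ring. simpl. rewrite IHN. ring. Qed.

Definition Ez (z : R) (m : nat) : R := z ^ m / INR (fact m).

Lemma fact_double k : INR (fact (2 * k)) = 4 ^ k * INR (fact k) * poch (1/2) k.
Proof.
  induction k.
  - simpl. ring.
  - replace (2 * S k)%nat with (S (S (2 * k))) by lia.
    rewrite !fact_simpl, !mult_INR, IHk. simpl poch. simpl pow.
    rewrite !S_INR, mult_INR. simpl (INR 2). field.
Qed.

Lemma term_eq b w k : 0 < b -> fco b k * (w ^ 2) ^ k = Ez (2 * w) (2 * k) * rr b k.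
Proof.
  intros hb. unfold fco, Ez, rr. rewrite fact_double.
  rewrite Rpow_mult_distr, !pow_mult.
  assert (0 < poch b k) by (apply poch_pos; auto).
  assert (0 < poch (1/2) k) by (apply poch_pos; lra).
  assert (0 < INR (fact k)) by apply fact_pos.
  replace (2 ^ 2) with 4 by ring.
  assert (0 < 4 ^ k) by (apply pow_lt; lra).
  field. repeat split; lra.
Qed.

Lemma Ez_nonneg z m : 0 <= z -> 0 <= Ez z m.
Proof. intros. unfold Ez. apply Rle_mult_inv_pos. apply pow_le; auto. apply fact_pos. Qed.

Lemma sum_even_odd z N : sum_f_R0 (fun k => Ez z (2 * k) + Ez z (S (2 * k))) N = sum_f_R0 (Ez z) (S (2 * N)).
Proof.
  induction N.
  - simpl. ring.
  - rewrite tech5, IHN. replace (S (2 * S N)) with (S (S (S (2 * N)))) by lia.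
    rewrite (tech5 _ (S (S (2 * N)))), (tech5 _ (S (2 * N))).
    replace (2 * S N)%nat with (S (S (2 * N))) by lia. ring.
Qed.

Lemma series_le_bound (a : nat -> R) l M : is_series a l -> (forall N, sum_f_R0 a N <= M) -> l <= M.
Proof.
  intros H HM. apply Rnot_lt_le. intros Hlt.
  destruct (series_partial_near a l H (l - M)) as [N HN]; [lra|].
  assert (HN' := HN N (le_n N)). rewrite Rabs_lt_between in HN'. specialize (HM N). lra.
Qed.

Lemma P1 z k d : 0 < z -> 0 <= d <= 1 ->
  Rpower (INR k + 1) (- d) <= Rpower z (- d) + z * Rpower z (- d) / (INR k + 1).
Proof.
  intros hz hd. assert (hk : 0 <= INR k) by apply pos_INR.
  assert (0 < Rpower z (- d)) by apply Rpower_pos.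
  destruct (Rle_dec z (INR k + 1)).
  - assert (Rpower (INR k + 1) (- d) <= Rpower z (- d)) by (apply Rpower_neg_anti; lra).
    assert (0 <= z * Rpower z (- d) / (INR k + 1)) by (apply Rle_mult_inv_pos; nra).
    lra.
  - assert (E : forall X, 0 < X -> X * Rpower X (- d) = Rpower X (1 - d)).
    { intros X hX. replace (1 - d) with (1 + - d) by ring. rewrite Rpower_plus, Rpower_1; auto. }
    assert (Rpower (INR k + 1) (1 - d) <= Rpower z (1 - d)) by (apply Rle_Rpower_l; lra).
    rewrite E by auto.
    replace (Rpower (INR k + 1) (- d)) with (Rpower (INR k + 1) (1 - d) / (INR k + 1)).
    2:{ rewrite <- E by lra. field. lra. }
    assert (Rpower (INR k + 1) (1 - d) / (INR k + 1) <= Rpower z (1 - d) / (INR k + 1)).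
    { unfold Rdiv. apply Rmult_le_compat_r; auto. left; apply Rinv_0_lt_compat; lra. }
    lra.
Qed.

Lemma fser_upper b w : 1/2 <= b <= 1 -> 0 < w ->
  fser b (w ^ 2) <= 2 * Rpower (2 * w) (- (b - 1/2)) * exp (2 * w).
Proof.
  intros hb hw. set (z := 2 * w). set (d := b - 1/2).
  assert (hz : 0 < z) by (unfold z; lra). assert (hd : 0 <= d <= 1) by (unfold d; lra).
  assert (hzd : 0 < Rpower z (- d)) by apply Rpower_pos.
  apply series_le_bound with (fun k => fco b k * (w ^ 2) ^ k). apply fser_series; lra.
  intros N.
  apply Rle_trans with (sum_f_R0 (fun k => 2 * Rpower z (- d) * (Ez z (2 * k) + Ez z (S (2 * k)))) N).
  - apply sum_Rle. intros k _. rewrite term_eq by lra. fold z.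
    assert (H1 := rr_upper b k hb). fold d in H1.
    assert (H2 := P1 z k d hz hd).
    assert (h0 : 0 <= Ez z (2 * k)) by (apply Ez_nonneg; lra).
    assert (h1 : 0 <= Ez z (S (2 * k))) by (apply Ez_nonneg; lra).
    assert (hk : 0 <= INR k) by apply pos_INR.
    assert (H3 : z * Ez z (2 * k) / (INR k + 1) <= 2 * Ez z (S (2 * k))).
    { unfold Ez. rewrite fact_simpl, mult_INR. change (z ^ S (2 * k)) with (z * z ^ (2 * k)).
      rewrite S_INR, mult_INR. replace (INR 2) with 2 by (simpl; ring).
      assert (0 < INR (fact (2 * k))) by apply fact_pos.
      assert (0 <= z ^ (2 * k)) by (apply pow_le; lra).
      apply Rle_trans with (z * z ^ (2 * k) / INR (fact (2 * k)) * / (INR k + 1)).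
      right. field. lra.
      apply Rle_trans with (z * z ^ (2 * k) / INR (fact (2 * k)) * (2 / (2 * INR k + 1))).
      apply Rmult_le_compat_l. apply Rle_mult_inv_pos; nra.
      apply Rmult_le_reg_r with ((INR k + 1) * (2 * INR k + 1)). nra.
      replace (/ (INR k + 1) * ((INR k + 1) * (2 * INR k + 1))) with (2 * INR k + 1) by (field; lra).
      replace (2 / (2 * INR k + 1) * ((INR k + 1) * (2 * INR k + 1))) with (2 * (INR k + 1)) by (field; lra).
      lra.
      right. field. lra. }
    apply Rle_trans with (Ez z (2 * k) * (Rpower z (- d) + z * Rpower z (- d) / (INR k + 1))).
    apply Rle_trans with (Ez z (2 * k) * Rpower (INR k + 1) (- d)).
    apply Rmult_le_compat_l; auto. apply Rmult_le_compat_l; auto.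
    replace (Ez z (2 * k) * (Rpower z (- d) + z * Rpower z (- d) / (INR k + 1)))
      with (Rpower z (- d) * (Ez z (2 * k) + z * Ez z (2 * k) / (INR k + 1))) by (field; lra).
    replace (2 * Rpower z (- d) * (Ez z (2 * k) + Ez z (S (2 * k))))
      with (Rpower z (- d) * (2 * Ez z (2 * k) + 2 * Ez z (S (2 * k)))) by ring.
    apply Rmult_le_compat_l; lra.
  - replace (sum_f_R0 (fun k => 2 * Rpower z (- d) * (Ez z (2 * k) + Ez z (S (2 * k)))) N)
      with (2 * Rpower z (- d) * sum_f_R0 (fun i => Ez z (2 * i) + Ez z (S (2 * i))) N)
      by (rewrite scal_sum; apply sum_eq; intros; ring).
    apply Rmult_le_compat_l. lra.
    rewrite sum_even_odd. apply exp_ge_taylor. lra.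
Qed.

Lemma kE_step z k : INR (S k) * Ez z (2 * S k) = z / 2 * Ez z (S (2 * k)).
Proof.
  unfold Ez. replace (2 * S k)%nat with (S (S (2 * k))) by lia.
  rewrite (fact_simpl (S (2 * k))), mult_INR.
  change (z ^ S (S (2 * k))) with (z * z ^ S (2 * k)).
  assert (0 < INR (fact (S (2 * k)))) by apply fact_pos.
  rewrite !S_INR, mult_INR. replace (INR 2) with 2 by (simpl; ring).
  assert (0 <= INR k) by apply pos_INR. field. lra.
Qed.

Lemma sum_kE z N : sum_f_R0 (fun k => INR k * Ez z (2 * k)) (S N) =
  z / 2 * sum_f_R0 (fun k => Ez z (S (2 * k))) N.
Proof.
  induction N.
  - change (sum_f_R0 (fun k => INR k * Ez z (2 * k)) 1) with (INR 0 * Ez z (2 * 0) + INR 1 * Ez z (2 * 1)).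
    change (sum_f_R0 (fun k => Ez z (S (2 * k))) 0) with (Ez z (S (2 * 0))).
    rewrite (kE_step z 0). simpl (INR 0). ring.
  - rewrite tech5, IHN, tech5, kE_step. ring.
Qed.

Lemma Ez_neg_even z k : Ez (- z) (2 * k) = Ez z (2 * k).
Proof. unfold Ez. replace (- z) with ((-1) * z) by ring. rewrite Rpow_mult_distr, pow_1_even. rewrite Rmult_1_l. reflexivity. Qed.

Lemma Ez_neg_odd z k : Ez (- z) (S (2 * k)) = - Ez z (S (2 * k)).
Proof. unfold Ez. replace (- z) with ((-1) * z) by ring. rewrite Rpow_mult_distr, pow_1_odd. set (P := z ^ S (2 * k)). set (F := INR (fact (S (2 * k)))). unfold Rdiv. ring. Qed.

Lemma CS_formula z N :
  sum_f_R0 (fun k => Ez z (2 * k)) N - / 4 * sum_f_R0 (fun k => Ez z (S (2 * k))) N =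
  3 / 8 * sum_f_R0 (Ez z) (S (2 * N)) + 5 / 8 * sum_f_R0 (Ez (- z)) (S (2 * N)).
Proof.
  rewrite <- !sum_even_odd.
  rewrite !plus_sum.
  replace (sum_f_R0 (fun k => Ez (- z) (2 * k)) N) with (sum_f_R0 (fun k => Ez z (2 * k)) N)
    by (apply sum_eq; intros; symmetry; apply Ez_neg_even).
  replace (sum_f_R0 (fun k => Ez (- z) (S (2 * k))) N) with (- sum_f_R0 (fun k => Ez z (S (2 * k))) N).
  lra.
  replace (- sum_f_R0 (fun k => Ez z (S (2 * k))) N) with ((-1) * sum_f_R0 (fun k => Ez z (S (2 * k))) N) by lra.
  rewrite scal_sum. apply sum_eq. intros. rewrite Ez_neg_odd. ring.
Qed.

Lemma fser_lower b w : 1/2 <= b <= 1 -> 1 <= w ->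
  rho b * (3/8) * Rpower (2 * w) (- (b - 1/2)) * exp (2 * w) <= fser b (w ^ 2).
Proof.
  intros hb hw. set (z := 2 * w). set (d := b - 1/2).
  assert (hz : 2 <= z) by (unfold z; lra). assert (hd : 0 <= d <= 1/2) by (unfold d; lra).
  assert (hzd : 0 < Rpower z (- d)) by apply Rpower_pos.
  assert (hr : 0 < rho b) by (apply rho_pos; lra).
  assert (HP : forall N, rho b * Rpower z (- d) *
     (sum_f_R0 (fun k => Ez z (2 * k)) N - / 4 * sum_f_R0 (fun k => Ez z (S (2 * k))) N)
     <= fser b (w ^ 2)).
  { intros N.
    apply Rle_trans with (sum_f_R0 (fun k => fco b k * (w ^ 2) ^ k) N).
    2:{ apply fser_partial_le; [lra|]. apply pow_le; lra. }
    apply Rle_trans with (sum_f_R0 (fun k => rho b * Rpower z (- d) *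
        ((1 + d - d / z) * Ez z (2 * k) - d / z * (INR k * Ez z (2 * k)))) N).
    -
      replace (sum_f_R0 (fun k => rho b * Rpower z (- d) * ((1 + d - d / z) * Ez z (2 * k) - d / z * (INR k * Ez z (2 * k)))) N)
        with (rho b * Rpower z (- d) * ((1 + d - d / z) * sum_f_R0 (fun k => Ez z (2 * k)) N
              - d / z * sum_f_R0 (fun k => INR k * Ez z (2 * k)) N)).
      2:{ rewrite <- (sum_lin (fun k => Ez z (2 * k)) (fun k => INR k * Ez z (2 * k))).
          rewrite <- sum_scal_l. reflexivity. }
      apply Rmult_le_compat_l. nra.
      assert (HkE : sum_f_R0 (fun k => INR k * Ez z (2 * k)) N <= z / 2 * sum_f_R0 (fun k => Ez z (S (2 * k))) N).
      { rewrite <- sum_kE, tech5.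
        assert (0 <= INR (S N) * Ez z (2 * S N)).
        { apply Rmult_le_pos. apply pos_INR. apply Ez_nonneg; lra. }
        lra. }
      assert (hC : 0 <= sum_f_R0 (fun k => Ez z (2 * k)) N) by (apply cond_pos_sum; intros; apply Ez_nonneg; lra).
      assert (hS : 0 <= sum_f_R0 (fun k => Ez z (S (2 * k))) N) by (apply cond_pos_sum; intros; apply Ez_nonneg; lra).
      assert (hdz : d / z <= d / 2 /\ 0 <= d / z).
      { split. unfold Rdiv. apply Rmult_le_compat_l; [lra|]. apply Rinv_le_contravar; lra.
        apply Rle_mult_inv_pos; lra. }
      assert (d / z * sum_f_R0 (fun k => INR k * Ez z (2 * k)) N <= d / z * (z / 2 * sum_f_R0 (fun k => Ez z (S (2 * k))) N))
        by (apply Rmult_le_compat_l; lra).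
      replace (d / z * (z / 2 * sum_f_R0 (fun k => Ez z (S (2 * k))) N)) with (d / 2 * sum_f_R0 (fun k => Ez z (S (2 * k))) N) in H by (field; lra).
      assert (d / 2 * sum_f_R0 (fun k => Ez z (S (2 * k))) N <= / 4 * sum_f_R0 (fun k => Ez z (S (2 * k))) N)
        by (apply Rmult_le_compat_r; lra).
      assert ((d - d / z) * sum_f_R0 (fun k => Ez z (2 * k)) N >= 0) by (apply Rle_ge, Rmult_le_pos; lra).
      nra.
    - apply sum_Rle. intros k _. rewrite term_eq by lra. fold z.
      assert (H1 := rr_lower b k hb). fold d in H1.
      assert (hk : 0 <= INR k) by apply pos_INR.
      assert (T := tangent (INR k + 1) z d ltac:(lra) ltac:(lra) ltac:(lra)).
      assert (h0 : 0 <= Ez z (2 * k)) by (apply Ez_nonneg; lra).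
      replace (rho b * Rpower z (- d) * ((1 + d - d / z) * Ez z (2 * k) - d / z * (INR k * Ez z (2 * k))))
        with (Ez z (2 * k) * (rho b * (Rpower z (- d) * (1 - d * ((INR k + 1) / z - 1))))) by (field; lra).
      apply Rmult_le_compat_l; auto.
      eapply Rle_trans; [|apply H1]. apply Rmult_le_compat_l; lra. }
  apply Rnot_lt_le. intros Hlt.
  set (eps := 5 / 8 * exp (- z)).
  assert (heps : 0 < eps) by (unfold eps; assert (0 < exp (- z)) by apply exp_pos; lra).
  destruct (series_partial_near _ _ (exp_series z) eps heps) as [N1 HN1].
  destruct (series_partial_near _ _ (exp_series (- z)) eps heps) as [N2 HN2].
  set (N := (N1 + N2)%nat).
  assert (A1 := HN1 (S (2 * N)) ltac:(unfold N; lia)).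
  assert (A2 := HN2 (S (2 * N)) ltac:(unfold N; lia)).
  rewrite Rabs_lt_between in A1, A2.
  assert (H := HP N). rewrite CS_formula in H.
  fold (Ez z) in A1. fold (Ez (- z)) in A2.
  assert (3 / 8 * exp z < 3 / 8 * sum_f_R0 (Ez z) (S (2 * N)) + 5 / 8 * sum_f_R0 (Ez (- z)) (S (2 * N))).
  { unfold eps in *. lra. }
  assert (rho b * Rpower z (- d) * (3 / 8 * exp z) <=
          rho b * Rpower z (- d) * (3 / 8 * sum_f_R0 (Ez z) (S (2 * N)) + 5 / 8 * sum_f_R0 (Ez (- z)) (S (2 * N)))).
  { apply Rmult_le_compat_l; nra. }
  replace (rho b * (3 / 8) * Rpower z (- d) * exp z) with (rho b * Rpower z (- d) * (3 / 8 * exp z)) in Hlt by ring.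
  lra.
Qed.

Lemma J_pos q J : 0 <= q -> IR (gm q) J -> 0 < J.
Proof.
  intros hq [Hex [Hp [Hu Ha]]].
  apply Rlt_le_trans with (RInt (gm q) 1 2); [|apply Hu; lra].
  apply Rlt_le_trans with (RInt (fun _ => exp (-4)) 1 2).
  rewrite RInt_constR. assert (0 < exp (-4)) by apply exp_pos. lra.
  apply RInt_le. lra. apply ex_RInt_constR. apply Hex; lra.
  intros u hu. unfold gm.
  assert (1 <= Rpower u q).
  { replace 1 with (Rpower u 0) by (apply Rpower_O; lra). apply Rle_Rpower; lra. }
  assert (exp (-4) <= exp (- u ^ 2)) by (apply exp_mono; nra).
  assert (0 < exp (-4)) by apply exp_pos. nra.
Qed.

Definition eG (alpha beta y u : R) : R := exp (Gfun alpha beta y u).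

Lemma eG_cont alpha beta y u : 0 < u -> continuous (eG alpha beta y) u.
Proof. intros hu. apply contR. unfold eG, Gfun. auto_derive. lra. Qed.

Lemma eG_ex alpha beta y A B : 0 < A -> A <= B -> ex_RInt (eG alpha beta y) A B.
Proof.
  intros hA hB. apply (@ex_RInt_continuous R_CompleteNormedModule).
  intros z Hz. rewrite Rmin_left, Rmax_right in Hz by lra. apply eG_cont. lra.
Qed.

Lemma Kf_identity alpha beta y u : y < 0 -> 0 < u ->
  Rpower u (2 * (alpha - beta) - 1) * Rpower (2 * (sqrt (- y) * u)) (- (alpha - 1/2))
    * exp (- u ^ 2) * exp (2 * (sqrt (- y) * u))
  = Rpower 2 (- (alpha - 1/2)) * Rpower (sqrt (- y)) (- (alpha - 1/2)) * eG alpha beta y u.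
Proof.
  intros hy hu. assert (hs : 0 < sqrt (- y)) by (apply sqrt_lt_R0; lra).
  unfold eG, Gfun, Rpower. rewrite !ln_mult by (try apply Rmult_lt_0_compat; lra).
  rewrite <- !exp_plus. f_equal. field.
Qed.

Lemma xu_eq y u : y < 0 -> - y * u ^ 2 = (sqrt (- y) * u) ^ 2.
Proof. intros hy. rewrite Rpow_mult_distr, pow2_sqrt by lra. reflexivity. Qed.

Lemma P_up alpha beta y u : 1/2 <= alpha <= 1 -> beta <= 0 -> y < 0 -> 0 < u ->
  Kf (alpha - beta) alpha (- y) u <=
  (4 * Rpower 2 (- (alpha - 1/2))) * Rpower (sqrt (- y)) (- (alpha - 1/2)) * eG alpha beta y u.
Proof.
  intros ha hb hy hu. assert (hs : 0 < sqrt (- y)) by (apply sqrt_lt_R0; lra).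
  unfold Kf. rewrite xu_eq by auto.
  assert (H := fser_upper alpha (sqrt (- y) * u) ha ltac:(apply Rmult_lt_0_compat; lra)).
  assert (0 <= gm (2 * (alpha - beta) - 1) u) by apply gm_pos.
  apply Rle_trans with (2 * gm (2 * (alpha - beta) - 1) u *
     (2 * Rpower (2 * (sqrt (- y) * u)) (- (alpha - 1 / 2)) * exp (2 * (sqrt (- y) * u)))).
  apply Rmult_le_compat_l; lra.
  replace (4 * Rpower 2 (- (alpha - 1 / 2)) * Rpower (sqrt (- y)) (- (alpha - 1 / 2)) * eG alpha beta y u)
    with (4 * (Rpower 2 (- (alpha - 1 / 2)) * Rpower (sqrt (- y)) (- (alpha - 1 / 2)) * eG alpha beta y u)) by ring.
  rewrite <- Kf_identity by auto.
  unfold gm. right. ring.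
Qed.

Lemma P_lo alpha beta y u : 1/2 <= alpha <= 1 -> beta <= 0 -> y < 0 -> 1 / sqrt (- y) <= u ->
  (3/4 * rho alpha * Rpower 2 (- (alpha - 1/2))) * Rpower (sqrt (- y)) (- (alpha - 1/2)) * eG alpha beta y u
  <= Kf (alpha - beta) alpha (- y) u.
Proof.
  intros ha hb hy hu. assert (hs : 0 < sqrt (- y)) by (apply sqrt_lt_R0; lra).
  assert (hu0 : 0 < u) by (eapply Rlt_le_trans; [|apply hu]; apply Rdiv_lt_0_compat; lra).
  assert (hw : 1 <= sqrt (- y) * u).
  { apply Rmult_le_compat_l with (r := sqrt (- y)) in hu; [|lra].
    replace (sqrt (- y) * (1 / sqrt (- y))) with 1 in hu by (field; lra). lra. }
  unfold Kf. rewrite xu_eq by auto.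
  assert (H := fser_lower alpha (sqrt (- y) * u) ha hw).
  assert (0 <= gm (2 * (alpha - beta) - 1) u) by apply gm_pos.
  apply Rle_trans with (2 * gm (2 * (alpha - beta) - 1) u *
     (rho alpha * (3 / 8) * Rpower (2 * (sqrt (- y) * u)) (- (alpha - 1 / 2)) * exp (2 * (sqrt (- y) * u)))).
  2:{ apply Rmult_le_compat_l; lra. }
  replace (3 / 4 * rho alpha * Rpower 2 (- (alpha - 1 / 2)) * Rpower (sqrt (- y)) (- (alpha - 1 / 2)) * eG alpha beta y u)
    with (3 / 4 * rho alpha * (Rpower 2 (- (alpha - 1 / 2)) * Rpower (sqrt (- y)) (- (alpha - 1 / 2)) * eG alpha beta y u)) by ring.
  rewrite <- Kf_identity by auto.
  unfold gm. right. field.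
Qed.

Lemma eG_small alpha beta y u : 1/2 <= alpha -> beta <= 0 -> y <= -1 -> 0 < u -> u <= 1 / sqrt (- y) ->
  eG alpha beta y u <= exp 2.
Proof.
  intros ha hb hy hu hup. assert (hs : 1 <= sqrt (- y)).
  { rewrite <- sqrt_1. apply sqrt_le_1; lra. }
  assert (hsu : sqrt (- y) * u <= 1).
  { apply Rmult_le_compat_l with (r := sqrt (- y)) in hup; [|lra].
    replace (sqrt (- y) * (1 / sqrt (- y))) with 1 in hup by (field; lra). lra. }
  assert (hu1 : u <= 1).
  { apply Rle_trans with (1 / sqrt (- y)); auto. unfold Rdiv. rewrite Rmult_1_l.
    rewrite <- Rinv_1. apply Rinv_le_contravar; lra. }
  assert (hl : ln u <= 0) by (rewrite <- ln_1; apply ln_le; lra).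
  unfold eG, Gfun. apply exp_mono.
  assert (0 <= alpha - 2 * beta - 1/2) by lra.
  assert ((alpha - 2 * beta - 1 / 2) * ln u <= 0) by nra.
  assert (0 <= u ^ 2) by (apply pow_le; lra). nra.
Qed.

Lemma RInt_gen_IR f l : IR f l -> RInt_gen f (at_right 0) (Rbar_locally p_infty) = l.
Proof.
  intros H. apply (@is_RInt_gen_unique R_CompleteNormedModule).
  apply Proper_StrongProper, at_right_proper_filter.
  apply Proper_StrongProper, Rbar_locally_filter.
  apply IR_is_RInt_gen; auto.
Qed.

Lemma RInt_gen_IRp p f l : IRp p f l -> RInt_gen f (at_point p) (Rbar_locally p_infty) = l.
Proof.
  intros H. apply (@is_RInt_gen_unique R_CompleteNormedModule).
  apply Proper_StrongProper, at_point_filter.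
  apply Proper_StrongProper, Rbar_locally_filter.
  apply IRp_is_RInt_gen; auto.
Qed.

Definition c_up (alpha : R) := 4 * Rpower 2 (- (alpha - 1/2)).
Definition c_lo (alpha : R) := 3/4 * rho alpha * Rpower 2 (- (alpha - 1/2)).

Lemma core alpha beta y : 1/2 <= alpha <= 1 -> beta <= 0 -> y <= -1 ->
  exists J F I0 I1, 0 < J /\ Gamma (alpha - beta) = 2 * J /\ kummerM beta alpha y = exp y * F /\
    RInt_gen (eG alpha beta y) (at_right 0) (Rbar_locally p_infty) = I0 /\
    RInt_gen (eG alpha beta y) (at_point (1 / sqrt (- y))) (Rbar_locally p_infty) = I1 /\
    2 * J * F <= c_up alpha * Rpower (sqrt (- y)) (- (alpha - 1/2)) * I0 /\
    c_lo alpha * Rpower (sqrt (- y)) (- (alpha - 1/2)) * I1 <= 2 * J * F /\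
    0 <= I0 /\ 0 <= I1.
Proof.
  intros ha hb hy.
  set (a := alpha - beta). set (S := Rpower (sqrt (- y)) (- (alpha - 1/2))).
  assert (hs : 1 <= sqrt (- y)) by (rewrite <- sqrt_1; apply sqrt_le_1; lra).
  set (p := 1 / sqrt (- y)).
  assert (hp : 0 < p /\ p <= 1).
  { unfold p. split. apply Rdiv_lt_0_compat; lra. unfold Rdiv. rewrite Rmult_1_l.
    rewrite <- Rinv_1. apply Rinv_le_contravar; lra. }
  assert (hS : 0 < S) by apply Rpower_pos.
  assert (hclo : 0 < c_lo alpha).
  { unfold c_lo. assert (0 < rho alpha) by (apply rho_pos; lra). assert (0 < Rpower 2 (- (alpha - 1/2))) by apply Rpower_pos. nra. }
  assert (hcup : 0 < c_up alpha) by (unfold c_up; assert (0 < Rpower 2 (- (alpha - 1/2))) by apply Rpower_pos; lra).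
  destruct (gm_IR_ex (2 * a - 1)) as [J HJ]. unfold a; lra.
  assert (hJ : 0 < J) by (apply (J_pos (2 * a - 1)); auto; unfold a; lra).
  set (F := Series (phi a alpha (- y))).
  assert (HK : IR (Kf a alpha (- y)) (2 * J * F)) by (apply Kf_IR; [unfold a; lra|lra|lra|exact HJ]).
  assert (HG : Gamma (alpha - beta) = 2 * J) by (apply Gamma_val; auto; unfold a in HJ; lra).
  assert (HM : kummerM beta alpha y = exp y * F).
  { unfold kummerM. apply is_series_unique.
    assert (H := kummer_transform a alpha y ltac:(unfold a; lra) ltac:(lra)).
    replace (alpha - a) with beta in H by (unfold a; ring). exact H. }
  assert (Hlo : forall u, p <= u -> eG alpha beta y u <= / (c_lo alpha * S) * Kf a alpha (- y) u).
  { intros u hu. assert (H := P_lo alpha beta y u ha hb ltac:(lra) hu). fold S in H.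
    fold a in H.
    assert (hcS : 0 < c_lo alpha * S) by (apply Rmult_lt_0_compat; lra).
    apply Rmult_le_reg_l with (c_lo alpha * S). exact hcS.
    rewrite <- Rmult_assoc, Rinv_r, Rmult_1_l by lra. unfold c_lo. lra. }
  destruct HK as [HKex [HKp [HKu HKa]]].
  destruct (IRp_exists p (eG alpha beta y) (/ (c_lo alpha * S) * (2 * J * F))) as [I1 HI1].
  { intros B hB. apply eG_ex; lra. }
  { intros u hu. left; apply exp_pos. }
  { intros B hB. apply Rle_trans with (RInt (fun u => / (c_lo alpha * S) * Kf a alpha (- y) u) p B).
    apply RInt_le; auto. apply eG_ex; lra. apply ex_RInt_scalR, HKex; lra.
    intros; apply Hlo; lra.
    rewrite RInt_scalR by (apply HKex; lra). apply Rmult_le_compat_l.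
    left; apply Rinv_0_lt_compat; apply Rmult_lt_0_compat; lra. apply HKu; lra. }
  destruct (IR_exists (eG alpha beta y) (exp 2 + / (c_lo alpha * S) * (2 * J * F))) as [I0 HI0].
  { intros; apply eG_ex; auto. }
  { intros u hu. left; apply exp_pos. }
  { intros A B hA hB.
    set (A' := Rmin A p). set (B' := Rmax B p).
    assert (h1 : 0 < A' /\ A' <= A /\ A' <= p) by (unfold A'; split; [apply Rmin_glb_lt; lra|split; [apply Rmin_l|apply Rmin_r]]).
    assert (h2 : B <= B' /\ p <= B') by (unfold B'; split; [apply Rmax_l|apply Rmax_r]).
    apply Rle_trans with (RInt (eG alpha beta y) A' B').
    { apply RInt_mono_AB; try lra. intros; left; apply exp_pos. apply eG_ex; lra. }
    rewrite <- (RC _ A' p B') by (apply eG_ex; lra).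
    assert (RInt (eG alpha beta y) A' p <= exp 2).
    { apply Rle_trans with (RInt (fun _ => exp 2) A' p).
      apply RInt_le; try lra. apply eG_ex; lra. apply ex_RInt_constR.
      intros u hu. apply eG_small; try lra. fold p. lra.
      rewrite RInt_constR. assert (0 < exp 2) by apply exp_pos.
      assert ((p - A') * exp 2 <= 1 * exp 2) by (apply Rmult_le_compat_r; lra). lra. }
    assert (RInt (eG alpha beta y) p B' <= / (c_lo alpha * S) * (2 * J * F)).
    { destruct HI1 as [_ [_ [HI1u _]]].
      apply Rle_trans with (RInt (fun u => / (c_lo alpha * S) * Kf a alpha (- y) u) p B').
      apply RInt_le; try lra. apply eG_ex; lra. apply ex_RInt_scalR, HKex; lra.
      intros; apply Hlo; lra.
      rewrite RInt_scalR by (apply HKex; lra). apply Rmult_le_compat_l.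
      left; apply Rinv_0_lt_compat; apply Rmult_lt_0_compat; lra. apply HKu; lra. }
    lra. }
  assert (HK : IR (Kf a alpha (- y)) (2 * J * F)) by (repeat split; auto).
  exists J, F, I0, I1. split; auto. split; auto. split; auto.
  split. apply RInt_gen_IR; auto.
  split. apply RInt_gen_IRp; auto.
  split.
  { apply IR_le with (Kf a alpha (- y)) (eG alpha beta y).
    apply Rmult_le_pos; lra. exact HK. exact HI0.
    intros u hu. assert (H := P_up alpha beta y u ha hb ltac:(lra) hu). fold S in H. unfold c_up. exact H. }
  split.
  { assert (H := IRp_le_IR p (Kf a alpha (- y)) (eG alpha beta y) I1 (2 * J * F) (/ (c_lo alpha * S))
                  ltac:(lra) ltac:(left; apply Rinv_0_lt_compat; apply Rmult_lt_0_compat; lra) HI1 HK ltac:(intros u hu; apply Hlo; lra)).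
    assert (hcS : 0 < c_lo alpha * S) by (apply Rmult_lt_0_compat; lra).
    apply Rmult_le_compat_l with (r := c_lo alpha * S) in H; [|lra].
    rewrite <- Rmult_assoc, Rinv_r, Rmult_1_l in H by lra. lra. }
  split. apply (IR_ge0 _ _ HI0). apply (IRp_ge0 _ _ _ HI1).
Qed.

Lemma S_eq alpha y : y < 0 ->
  Rpower (- y) ((1 - 2 * alpha) / 4) = Rpower (sqrt (- y)) (- (alpha - 1/2)).
Proof.
  intros hy. rewrite <- Rpower_sqrt by lra. rewrite Rpower_mult. f_equal. field.
Qed.

Theorem lemma4p3 (n : nat) (hn : (2 <= n)%nat) :
  let alpha := 1 - 1 / INR n in
  exists C : R, 0 < C /\
    forall beta y : R, beta <= 0 -> y <= -1 ->
      / C * (exp y * Rpower (- y) ((1 - 2 * alpha) / 4) / Gamma (alpha - beta))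
          * RInt_gen (fun u => exp (Gfun alpha beta y u))
              (at_point (1 / sqrt (- y))) (Rbar_locally p_infty)
        <= kummerM beta alpha y /\
      kummerM beta alpha y <=
        C * (exp y * Rpower (- y) ((1 - 2 * alpha) / 4) / Gamma (alpha - beta))
          * RInt_gen (fun u => exp (Gfun alpha beta y u))
              (at_right 0) (Rbar_locally p_infty).
Proof.
  intros alpha.
  assert (hn' : 2 <= INR n) by (replace 2 with (INR 2) by (simpl; ring); apply le_INR; lia).
  assert (ha : 1/2 <= alpha <= 1).
  { unfold alpha. split.
    - assert (1 / INR n <= 1 / 2).
      { unfold Rdiv. rewrite !Rmult_1_l. apply Rinv_le_contravar; lra. }
      lra.
    - assert (0 < 1 / INR n) by (apply Rdiv_lt_0_compat; lra). lra. }
  assert (hcup : 0 < c_up alpha) by (unfold c_up; assert (0 < Rpower 2 (- (alpha - 1/2))) by apply Rpower_pos; lra).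
  assert (hclo : 0 < c_lo alpha).
  { unfold c_lo. assert (0 < rho alpha) by (apply rho_pos; lra). assert (0 < Rpower 2 (- (alpha - 1/2))) by apply Rpower_pos.
    apply Rmult_lt_0_compat; [apply Rmult_lt_0_compat|]; lra. }
  set (C := Rmax (c_up alpha) (/ c_lo alpha)).
  assert (hC1 : c_up alpha <= C) by apply Rmax_l.
  assert (hC2 : / c_lo alpha <= C) by apply Rmax_r.
  assert (hC : 0 < C) by lra.
  assert (hCi : / C <= c_lo alpha).
  { rewrite <- (Rinv_inv (c_lo alpha)). apply Rinv_le_contravar; auto. apply Rinv_0_lt_compat; auto. }
  exists C. split; auto.
  intros beta y hb hy.
  destruct (core alpha beta y ha hb hy) as [J [F [I0 [I1 [hJ [HG [HM [H0 [H1 [Hup [Hlo [hI0 hI1]]]]]]]]]]]].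
  change (fun u => exp (Gfun alpha beta y u)) with (eG alpha beta y).
  rewrite H0, H1, HG, HM, S_eq by lra.
  set (S := Rpower (sqrt (- y)) (- (alpha - 1 / 2))) in *.
  assert (hS : 0 < S) by apply Rpower_pos.
  assert (hE : 0 < exp y) by apply exp_pos.
  set (Q := exp y / (2 * J)).
  assert (hQ : 0 < Q) by (unfold Q; apply Rdiv_lt_0_compat; lra).
  replace (exp y * F) with (Q * (2 * J * F)) by (unfold Q; field; lra).
  split.
  - replace (/ C * (exp y * S / (2 * J)) * I1) with (Q * (/ C * S * I1)) by (unfold Q; field; lra).
    apply Rmult_le_compat_l; [lra|].
    apply Rle_trans with (c_lo alpha * S * I1); auto.
    rewrite !Rmult_assoc. apply Rmult_le_compat_r. apply Rmult_le_pos; lra. exact hCi.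
  - replace (C * (exp y * S / (2 * J)) * I0) with (Q * (C * S * I0)) by (unfold Q; field; lra).
    apply Rmult_le_compat_l; [lra|].
    apply Rle_trans with (c_up alpha * S * I0); auto.
    rewrite !Rmult_assoc. apply Rmult_le_compat_r. apply Rmult_le_pos; lra. exact hC1.
Qed.
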